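(* Let $(\omega_0,\rho_0)$ be a half-flat $H^{\varepsilon,\tau}$-structure on the Lie algebra $\mathfrak h_3\oplus\mathfrak h_3$ with $\omega_0(\mathfrak z,\mathfrak z)=0$, $\mathfrak z$ the centre. Then the solution $(\omega(t),\rho(t))$ of the evolution equations $\dot\rho=d\omega$, $\dot\sigma=d\hat\rho$ ($\sigma=\frac12\omega^2$) with initial value $(\omega_0,\rho_0)$ is affine linear, \[ \sigma(t)=\tfrac12\omega_0^2+t\,d\hat\rho_0,\qquad \rho(t)=\rho_0+t\,d\omega_0,\] and is defined (with $\omega(t)$ nondegenerate and $\rho(t)$ stable) for all $t\in\mathbb R$.
   Context: $\mathfrak h_3$ is the three-dimensional Heisenberg Lie algebra; forms on a Lie algebra carry the Chevalley–Eilenberg differential $d$. For a stable three-form $\rho$ on an oriented six-dimensional space: $K_\rho(v)=\kappa((v\lrcorner\rho)\wedge\rho)$ ($\kappa$ canonical), $\lambda(\rho)=\frac16\mathrm{tr}K_\rho^2$, $\phi(\rho)=\sqrt{|\lambda(\rho)|}$, $J_\rho=K_\rho/\phi(\rho)$, and $\hat\rho$ is defined by $d\phi_\rho(\beta)=\hat\rho\wedge\beta$ (it equals $J_\rho^*\rho$). An $H^{\varepsilon,\tau}$-structure on a Lie algebra is a compatible normalised pair $(\omega,\rho)$ ($\omega$ nondegenerate, $\rho$ stable, $\omega\wedge\rho=0$, $J_\rho^*\rho\wedge\rho=\frac23\omega^3$, orientation by $\omega^3$), of type ${\rm SU}(3)$, ${\rm SU}(1,2)$ or ${\rm SL}(3,\mathbb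 R)$; it is half-flat if $d\rho=0$ and $d(\omega^2)=0$. *)

(* Defs.v *)
From Stdlib Require Import Reals Arith List.
Import ListNotations.
Open Scope R_scope.

(** Basis e_0..e_5 of the Lie algebra, dual basis e^0..e^5.
  A form is a coefficient function [nat -> R] on bitmasks S < 64:
  alpha = sum_S alpha(S) e^S, with e^S = e^{s1} /\ ... /\ e^{sk}, s1<...<sk
  the elements of S.  Only masks S < 64 are meaningful; forms are compared
  with [feq] (equality on all masks < 64). *)

Definition Form := nat -> R.
Definition Vec := nat -> R.   (* components 0..5 *)

Definition masks : list nat := seq 0 64.
Definition idx : list nat := seq 0 6.

Definition sumL (f : nat -> R) (l : list nat) : R :=
  fold_right (fun x acc => f x + acc) 0 l.

Definition bits (S : nat) : list nat := filter (fun i => Nat.testbit S i) idx.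
Definition popcount (S : nat) : nat := length (bits S).

Definition feq (a b : Form) : Prop := forall S, (S < 64)%nat -> a S = b S.
Definition isForm (k : nat) (a : Form) : Prop :=
  forall S, (S < 64)%nat -> popcount S <> k -> a S = 0.

Definition fzero : Form := fun _ => 0.
Definition fadd (a b : Form) : Form := fun S => a S + b S.
Definition fscale (c : R) (a : Form) : Form := fun S => c * a S.

(** sign of e^A /\ e^B = sign * e^(A u B) for disjoint A, B *)
Definition inversions (A B : nat) : nat :=
  length (filter (fun p => Nat.ltb (snd p) (fst p)) (list_prod (bits A) (bits B))).

Definition wedge (a b : Form) : Form := fun S =>
  sumL (fun A => if Nat.eqb (Nat.land A S) A
                 then (-1) ^ (inversions A (S - A)%nat) * a A * b (S - A)%nat
                 else 0) masks.

(** interior product (v _| alpha)(x2,..,xk) = alpha(v,x2,..,xk) *)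
Definition interior (v : Vec) (a : Form) : Form := fun S =>
  sumL (fun i => if Nat.testbit S i then 0
                 else v i * (-1) ^ (length (filter (fun j => Nat.ltb j i) (bits S)))
                      * a (S + 2 ^ i)%nat) idx.

Definition eval2 (w : Form) (v u : Vec) : R := interior u (interior v w) 0%nat.

Definition ebasis (j : nat) : Vec := fun i => if Nat.eqb i j then 1%R else 0%R.

(** * The Lie algebra h3 (+) h3 : [e0,e1] = e2, [e3,e4] = e5 *)
Definition cst (i j k : nat) : R :=
  match i, j, k with
  | 0%nat, 1%nat, 2%nat => 1 | 1%nat, 0%nat, 2%nat => -1
  | 3%nat, 4%nat, 5%nat => 1 | 4%nat, 3%nat, 5%nat => -1
  | _, _, _ => 0 end.

Definition bracket (v w : Vec) : Vec := fun k =>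
  sumL (fun i => sumL (fun j => cst i j k * v i * w j) idx) idx.

Definition inCentre (z : Vec) : Prop :=
  forall y k, (k < 6)%nat -> bracket z y k = 0.

(** * Chevalley--Eilenberg differential
   On 1-forms: d alpha (x,y) = - alpha([x,y]); extended as an
   antiderivation (Leibniz rule) to all forms. *)
Definition mono (l : list nat) : Form := fun S =>
  if Nat.eqb S (fold_right (fun i acc => (2 ^ i + acc)%nat) 0%nat l) then 1 else 0.

Definition d1 (k : nat) : Form := fun S =>
  match bits S with
  | [i; j] => - cst i j k
  | _ => 0 end.

Fixpoint dmono (l : list nat) : Form :=
  match l with
  | [] => fzero
  | i :: l' => fadd (wedge (d1 i) (mono l')) (fscale (-1) (wedge (mono [i]) (dmono l')))
  end.

Definition dF (a : Form) : Form := fun T =>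
  sumL (fun S => a S * dmono (bits S) T) masks.

(** * Stable three-forms and Hitchin's functional
   Reference volume form nu = e^{012345} (mask 63).  With respect to nu,
   kappa(xi) = w (x) nu where w _| nu = xi, so
   K_rho(v) = w with w_i = (-1)^i ((v _| rho) /\ rho)(63 - 2^i). *)
Definition Kmat (rho : Form) (i j : nat) : R :=
  (-1) ^ i * wedge (interior (ebasis j) rho) rho (63 - 2 ^ i)%nat.

(** lambda(rho) = 1/6 tr K_rho^2, as the coefficient of nu (x) nu *)
Definition lam (rho : Form) : R :=
  / 6 * sumL (fun i => sumL (fun j => Kmat rho i j * Kmat rho j i) idx) idx.

Definition stable (rho : Form) : Prop := lam rho <> 0.

Definition cube (w : Form) : Form := wedge w (wedge w w).

Definition orient (w : Form) : R :=
  if Rlt_dec 0 (cube w 63%nat) then 1 else -1.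

Definition phi (w rho : Form) : R := orient w * sqrt (Rabs (lam rho)).

Definition IsHat (w rho rh : Form) : Prop :=
  isForm 3 rh /\
  forall beta, isForm 3 beta ->
    derivable_pt_lim (fun s => phi w (fadd rho (fscale s beta))) 0
                     (wedge rh beta 63%nat).

Definition nondeg (w : Form) : Prop :=
  forall v : Vec, (forall u : Vec, eval2 w v u = 0) -> forall i, (i < 6)%nat -> v i = 0.

Definition HStructure (w rho : Form) : Prop :=
  isForm 2 w /\ isForm 3 rho /\ nondeg w /\ stable rho /\
  feq (wedge w rho) fzero /\
  exists rh, IsHat w rho rh /\ feq (wedge rh rho) (fscale (2/3) (cube w)).

Definition HalfFlat (w rho : Form) : Prop :=
  feq (dF rho) fzero /\ feq (dF (wedge w w)) fzero.

Definition sigma4 (w : Form) : Form := fscale (1/2) (wedge w w).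

(* Main.v *)
Require Import Defs.
From Stdlib Require Import Reals Arith List.
Open Scope R_scope.
From Stdlib Require Import Lia Lra ZArith FunctionalExtensionality.
Require Import Defs.
Import ListNotations.
Open Scope R_scope.

Lemma sumL_ext (f g : nat -> R) l :
  (forall x, In x l -> f x = g x) -> sumL f l = sumL g l.
Proof.
  induction l as [|a l IH]; simpl; intros H; [reflexivity|].
  rewrite (H a (or_introl eq_refl)), IH; auto.
Qed.

Lemma sumL_zero (f : nat -> R) l : (forall x, In x l -> f x = 0) -> sumL f l = 0.
Proof.
  induction l as [|a l IH]; simpl; intros H; [reflexivity|].
  rewrite (H a (or_introl eq_refl)), IH; auto; lra.
Qed.

Lemma sumL_plus (f g : nat -> R) l : sumL (fun x => f x + g x) l = sumL f l + sumL g l.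
Proof. induction l; simpl; [lra|]. rewrite IHl; lra. Qed.

Lemma sumL_scal (c : R) (f : nat -> R) l : sumL (fun x => c * f x) l = c * sumL f l.
Proof. induction l; simpl; [lra|]. rewrite IHl; lra. Qed.

Lemma in_masks x : In x masks -> (x < 64)%nat.
Proof. unfold masks; rewrite in_seq; lia. Qed.

Lemma in_idx x : In x idx -> (x < 6)%nat.
Proof. unfold idx; rewrite in_seq; lia. Qed.

Lemma wedge_ext (a a' b b' : Form) T :
  (forall S, (S < 64)%nat -> a S = a' S) -> (forall S, (S < 64)%nat -> b S = b' S) ->
  (T < 64)%nat -> wedge a b T = wedge a' b' T.
Proof.
  intros Ha Hb HT. unfold wedge. apply sumL_ext. intros A HA.
  apply in_masks in HA. destruct (Nat.eqb (Nat.land A T) A); [|reflexivity].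
  rewrite Ha, Hb by lia. reflexivity.
Qed.

Lemma wedge_addl (a b c : Form) T : wedge (fadd a b) c T = wedge a c T + wedge b c T.
Proof.
  unfold wedge, fadd. rewrite <- sumL_plus. apply sumL_ext. intros A _.
  destruct (Nat.eqb (Nat.land A T) A); ring.
Qed.

Lemma wedge_scall (k : R) (a c : Form) T : wedge (fscale k a) c T = k * wedge a c T.
Proof.
  unfold wedge, fscale. rewrite <- sumL_scal. apply sumL_ext. intros A _.
  destruct (Nat.eqb (Nat.land A T) A); ring.
Qed.

Lemma dF_add (a b : Form) T : dF (fadd a b) T = dF a T + dF b T.
Proof. unfold dF, fadd. rewrite <- sumL_plus. apply sumL_ext. intros; ring. Qed.

Lemma dF_scal (k : R) (a : Form) T : dF (fscale k a) T = k * dF a T.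
Proof. unfold dF, fscale. rewrite <- sumL_scal. apply sumL_ext. intros; ring. Qed.

Lemma dF_ext (a b : Form) T : (forall S, (S < 64)%nat -> a S = b S) -> dF a T = dF b T.
Proof. intros H. unfold dF. apply sumL_ext. intros S HS. rewrite H; auto using in_masks. Qed.

Lemma forallb_seq (p : nat -> bool) n : forallb p (seq 0 n) = true -> forall x, (x < n)%nat -> p x = true.
Proof. intros H x Hx. rewrite forallb_forall in H. apply H. rewrite in_seq; lia. Qed.

Lemma bitadd_lt : forall S i, (S < 64)%nat -> (i < 6)%nat -> Nat.testbit S i = false -> (S + 2 ^ i < 64)%nat.
Proof.
  assert (H : forallb (fun S => forallb (fun i => orb (Nat.testbit S i) (Nat.ltb (S + 2^i) 64)) (seq 0 6)) (seq 0 64) = true) by (vm_compute; reflexivity).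
  intros S i HS Hi Hb. pose proof (forallb_seq _ _ H S HS) as H1. cbv beta in H1.
  pose proof (forallb_seq _ _ H1 i Hi) as H2. cbv beta in H2. rewrite Hb in H2. simpl in H2.
  apply Nat.ltb_lt; exact H2.
Qed.

Lemma interior_ext (v : Vec) (a b : Form) S :
  (forall S, (S < 64)%nat -> a S = b S) -> (S < 64)%nat -> interior v a S = interior v b S.
Proof.
  intros H HS. unfold interior. apply sumL_ext. intros i Hi. apply in_idx in Hi.
  destruct (Nat.testbit S i) eqn:E; [reflexivity|]. rewrite H; auto using bitadd_lt.
Qed.

Lemma Kmat_ext (r r' : Form) i j : (forall S, (S < 64)%nat -> r S = r' S) -> Kmat r i j = Kmat r' i j.
Proof.
  intros H. unfold Kmat. f_equal. apply wedge_ext; auto; [|lia].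
  intros; apply interior_ext; auto.
Qed.

Lemma cube_ext (w w' : Form) : (forall S, (S < 64)%nat -> w S = w' S) -> cube w 63%nat = cube w' 63%nat.
Proof.
  intros H. unfold cube. apply wedge_ext; auto. intros; apply wedge_ext; auto.
Qed.

Lemma eval2_ext (w w' : Form) v u : (forall S, (S < 64)%nat -> w S = w' S) -> eval2 w v u = eval2 w' v u.
Proof.
  intros H. unfold eval2. apply interior_ext; [|lia]. intros; apply interior_ext; auto.
Qed.

Definition Kp (r : Form) (i j : nat) : R :=
  match i, j with
  | 0%nat, 0%nat => r 7%nat * r 56%nat + (-1) * r 11%nat * r 52%nat + r 13%nat * r 50%nat + r 14%nat * r 49%nat + r 19%nat * r 44%nat + (-1) * r 21%nat * r 42%nat + (-1) * r 22%nat * r 41%nat + r 25%nat * r 38%nat + r 26%nat * r 37%nat + (-1) * r 28%nat * r 35%nat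
  | 0%nat, 1%nat => (2) * r 14%nat * r 50%nat + (-2) * r 22%nat * r 42%nat + (2) * r 26%nat * r 38%nat
  | 0%nat, 2%nat => (2) * r 14%nat * r 52%nat + (-2) * r 22%nat * r 44%nat + (2) * r 28%nat * r 38%nat
  | 0%nat, 3%nat => (2) * r 14%nat * r 56%nat + (-2) * r 26%nat * r 44%nat + (2) * r 28%nat * r 42%nat
  | 0%nat, 4%nat => (2) * r 22%nat * r 56%nat + (-2) * r 26%nat * r 52%nat + (2) * r 28%nat * r 50%nat
  | 0%nat, 5%nat => (2) * r 38%nat * r 56%nat + (-2) * r 42%nat * r 52%nat + (2) * r 44%nat * r 50%nat
  | 1%nat, 0%nat => (-2) * r 13%nat * r 49%nat + (2) * r 21%nat * r 41%nat + (-2) * r 25%nat * r 37%nat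
  | 1%nat, 1%nat => r 7%nat * r 56%nat + (-1) * r 11%nat * r 52%nat + (-1) * r 13%nat * r 50%nat + (-1) * r 14%nat * r 49%nat + r 19%nat * r 44%nat + r 21%nat * r 42%nat + r 22%nat * r 41%nat + (-1) * r 25%nat * r 38%nat + (-1) * r 26%nat * r 37%nat + (-1) * r 28%nat * r 35%nat
  | 1%nat, 2%nat => (-2) * r 13%nat * r 52%nat + (2) * r 21%nat * r 44%nat + (-2) * r 28%nat * r 37%nat
  | 1%nat, 3%nat => (-2) * r 13%nat * r 56%nat + (2) * r 25%nat * r 44%nat + (-2) * r 28%nat * r 41%nat
  | 1%nat, 4%nat => (-2) * r 21%nat * r 56%nat + (2) * r 25%nat * r 52%nat + (-2) * r 28%nat * r 49%nat
  | 1%nat, 5%nat => (-2) * r 37%nat * r 56%nat + (2) * r 41%nat * r 52%nat + (-2) * r 44%nat * r 49%nat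
  | 2%nat, 0%nat => (2) * r 11%nat * r 49%nat + (-2) * r 19%nat * r 41%nat + (2) * r 25%nat * r 35%nat
  | 2%nat, 1%nat => (2) * r 11%nat * r 50%nat + (-2) * r 19%nat * r 42%nat + (2) * r 26%nat * r 35%nat
  | 2%nat, 2%nat => r 7%nat * r 56%nat + r 11%nat * r 52%nat + r 13%nat * r 50%nat + (-1) * r 14%nat * r 49%nat + (-1) * r 19%nat * r 44%nat + (-1) * r 21%nat * r 42%nat + r 22%nat * r 41%nat + (-1) * r 25%nat * r 38%nat + r 26%nat * r 37%nat + r 28%nat * r 35%nat
  | 2%nat, 3%nat => (2) * r 11%nat * r 56%nat + (-2) * r 25%nat * r 42%nat + (2) * r 26%nat * r 41%nat
  | 2%nat, 4%nat => (2) * r 19%nat * r 56%nat + (-2) * r 25%nat * r 50%nat + (2) * r 26%nat * r 49%nat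
  | 2%nat, 5%nat => (2) * r 35%nat * r 56%nat + (-2) * r 41%nat * r 50%nat + (2) * r 42%nat * r 49%nat
  | 3%nat, 0%nat => (-2) * r 7%nat * r 49%nat + (2) * r 19%nat * r 37%nat + (-2) * r 21%nat * r 35%nat
  | 3%nat, 1%nat => (-2) * r 7%nat * r 50%nat + (2) * r 19%nat * r 38%nat + (-2) * r 22%nat * r 35%nat
  | 3%nat, 2%nat => (-2) * r 7%nat * r 52%nat + (2) * r 21%nat * r 38%nat + (-2) * r 22%nat * r 37%nat
  | 3%nat, 3%nat => (-1) * r 7%nat * r 56%nat + (-1) * r 11%nat * r 52%nat + r 13%nat * r 50%nat + (-1) * r 14%nat * r 49%nat + (-1) * r 19%nat * r 44%nat + r 21%nat * r 42%nat + (-1) * r 22%nat * r 41%nat + r 25%nat * r 38%nat + (-1) * r 26%nat * r 37%nat + r 28%nat * r 35%nat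
  | 3%nat, 4%nat => (-2) * r 19%nat * r 52%nat + (2) * r 21%nat * r 50%nat + (-2) * r 22%nat * r 49%nat
  | 3%nat, 5%nat => (-2) * r 35%nat * r 52%nat + (2) * r 37%nat * r 50%nat + (-2) * r 38%nat * r 49%nat
  | 4%nat, 0%nat => (2) * r 7%nat * r 41%nat + (-2) * r 11%nat * r 37%nat + (2) * r 13%nat * r 35%nat
  | 4%nat, 1%nat => (2) * r 7%nat * r 42%nat + (-2) * r 11%nat * r 38%nat + (2) * r 14%nat * r 35%nat
  | 4%nat, 2%nat => (2) * r 7%nat * r 44%nat + (-2) * r 13%nat * r 38%nat + (2) * r 14%nat * r 37%nat
  | 4%nat, 3%nat => (2) * r 11%nat * r 44%nat + (-2) * r 13%nat * r 42%nat + (2) * r 14%nat * r 41%nat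
  | 4%nat, 4%nat => (-1) * r 7%nat * r 56%nat + r 11%nat * r 52%nat + (-1) * r 13%nat * r 50%nat + r 14%nat * r 49%nat + r 19%nat * r 44%nat + (-1) * r 21%nat * r 42%nat + r 22%nat * r 41%nat + r 25%nat * r 38%nat + (-1) * r 26%nat * r 37%nat + r 28%nat * r 35%nat
  | 4%nat, 5%nat => (2) * r 35%nat * r 44%nat + (-2) * r 37%nat * r 42%nat + (2) * r 38%nat * r 41%nat
  | 5%nat, 0%nat => (-2) * r 7%nat * r 25%nat + (2) * r 11%nat * r 21%nat + (-2) * r 13%nat * r 19%nat
  | 5%nat, 1%nat => (-2) * r 7%nat * r 26%nat + (2) * r 11%nat * r 22%nat + (-2) * r 14%nat * r 19%nat
  | 5%nat, 2%nat => (-2) * r 7%nat * r 28%nat + (2) * r 13%nat * r 22%nat + (-2) * r 14%nat * r 21%nat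
  | 5%nat, 3%nat => (-2) * r 11%nat * r 28%nat + (2) * r 13%nat * r 26%nat + (-2) * r 14%nat * r 25%nat
  | 5%nat, 4%nat => (-2) * r 19%nat * r 28%nat + (2) * r 21%nat * r 26%nat + (-2) * r 22%nat * r 25%nat
  | 5%nat, 5%nat => (-1) * r 7%nat * r 56%nat + r 11%nat * r 52%nat + (-1) * r 13%nat * r 50%nat + r 14%nat * r 49%nat + (-1) * r 19%nat * r 44%nat + r 21%nat * r 42%nat + (-1) * r 22%nat * r 41%nat + (-1) * r 25%nat * r 38%nat + r 26%nat * r 37%nat + (-1) * r 28%nat * r 35%nat
  | _, _ => 0 end.

Definition clean3 (r : Form) : Form := fun S => if Nat.eqb (popcount S) 3 then r S else 0.

Lemma clean3_eq r : isForm 3 r -> forall S, (S < 64)%nat -> r S = clean3 r S.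
Proof.
  intros H S HS. unfold clean3. destruct (Nat.eqb (popcount S) 3) eqn:E; [reflexivity|].
  apply H; auto. apply Nat.eqb_neq; auto.
Qed.

Lemma Kmat_Kp r i j : isForm 3 r -> (i < 6)%nat -> (j < 6)%nat -> Kmat r i j = Kp r i j.
Proof.
  intros H Hi Hj. rewrite (Kmat_ext r (clean3 r)) by (apply clean3_eq; auto).
  do 6 (destruct i as [|i]; [ do 6 (destruct j as [|j]; [cbv -[Rplus Rmult Ropp Rinv IZR Rminus Rdiv]; ring|]); lia|]). lia.
Qed.

Definition LK (r : Form) : R := / 6 * sumL (fun i => sumL (fun j => Kp r i j * Kp r j i) idx) idx.
Definition Kp2 (r b : Form) (i j : nat) : R := Kp (fadd r b) i j - Kp r i j - Kp b i j.
Definition DK (r b : Form) : R :=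
  / 6 * sumL (fun i => sumL (fun j => Kp2 r b i j * Kp r j i + Kp r i j * Kp2 r b j i) idx) idx.
Definition eB (B : nat) : Form := fun S => if Nat.eqb S B then 1 else 0.
Definition cr (r : Form) : Form := fun S =>
  if (Nat.eqb S 37 || Nat.eqb S 38 || Nat.eqb S 44 || Nat.eqb S 52)%bool then 0 else r S.
Definition cg (g : Form) : Form := fun S =>
  if (Nat.eqb S 11 || Nat.eqb S 19 || Nat.eqb S 25 || Nat.eqb S 26)%bool then g S else 0.

Ltac destr6 i := destruct i as [|[|[|[|[|[|i]]]]]].

Lemma Kp_ext (r r' : Form) i j : (forall S, (S < 64)%nat -> r S = r' S) -> Kp r i j = Kp r' i j.
Proof.
  intros H. destr6 i; destr6 j; cbv beta iota delta [Kp]; repeat rewrite H by lia; reflexivity.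
Qed.

Lemma LK_ext r r' : (forall S, (S < 64)%nat -> r S = r' S) -> LK r = LK r'.
Proof.
  intros H. unfold LK. f_equal. apply sumL_ext; intros i _. apply sumL_ext; intros j _.
  rewrite !(Kp_ext r r') by auto. reflexivity.
Qed.

Lemma fadd_ext (a a' b b' : Form) : (forall S, (S < 64)%nat -> a S = a' S) -> (forall S, (S < 64)%nat -> b S = b' S) ->
  forall S, (S < 64)%nat -> fadd a b S = fadd a' b' S.
Proof. intros Ha Hb S HS. unfold fadd. rewrite Ha, Hb; auto. Qed.

Lemma DK_ext r r' b : (forall S, (S < 64)%nat -> r S = r' S) -> DK r b = DK r' b.
Proof.
  intros H. unfold DK, Kp2. f_equal. apply sumL_ext; intros i _. apply sumL_ext; intros j _.
  rewrite !(Kp_ext r r') by auto.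
  rewrite !(Kp_ext (fadd r b) (fadd r' b)) by (apply fadd_ext; auto). reflexivity.
Qed.

Lemma lam_LK r : isForm 3 r -> lam r = LK r.
Proof.
  intros H. unfold lam, LK. f_equal. apply sumL_ext; intros i Hi. apply sumL_ext; intros j Hj.
  apply in_idx in Hi; apply in_idx in Hj. rewrite !Kmat_Kp by auto. reflexivity.
Qed.

Lemma Kp_quad r b s i j :
  Kp (fadd r (fscale s b)) i j = Kp r i j + s * Kp2 r b i j + s ^ 2 * Kp b i j.
Proof.
  unfold Kp2. destr6 i; destr6 j; cbv beta iota delta [Kp fadd fscale]; ring.
Qed.

Lemma Kp2_self r i j : Kp2 r r i j = 2 * Kp r i j.
Proof.
  unfold Kp2. destr6 i; destr6 j; cbv beta iota delta [Kp fadd fscale]; ring.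
Qed.

Lemma DK_euler r : DK r r = 4 * LK r.
Proof.
  unfold DK, LK.
  rewrite (sumL_ext _ (fun i => 4 * sumL (fun j => Kp r i j * Kp r j i) idx)).
  - rewrite sumL_scal. ring.
  - intros i _. rewrite <- sumL_scal. apply sumL_ext; intros j _. rewrite !Kp2_self. ring.
Qed.

Lemma isForm3_add a b k : isForm 3 a -> isForm 3 b -> isForm 3 (fadd a (fscale k b)).
Proof. intros Ha Hb S HS Hp. unfold fadd, fscale. rewrite Ha, Hb; auto. ring. Qed.

Lemma dsumL (f : nat -> R -> R) (f' : nat -> R) l x :
  (forall i, In i l -> derivable_pt_lim (f i) x (f' i)) ->
  derivable_pt_lim (fun s => sumL (fun i => f i s) l) x (sumL f' l).
Proof.
  induction l as [|a l IH]; intros H; simpl.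
  - apply (derivable_pt_lim_const 0 x).
  - apply (derivable_pt_lim_plus (f a) (fun s => sumL (fun i => f i s) l)).
    + apply H; left; auto.
    + apply IH; intros; apply H; right; auto.
Qed.

Lemma dlin (a c e : R) : derivable_pt_lim (fun s => a + c * s + e * s ^ 2) 0 c.
Proof.
  assert (H1 := derivable_pt_lim_const a 0).
  assert (H2 := derivable_pt_lim_scal id c 0 1 (derivable_pt_lim_id 0)).
  assert (H3 := derivable_pt_lim_scal (fun y => y ^ 2) e 0 _ (derivable_pt_lim_pow 0 2)).
  assert (H4 := derivable_pt_lim_plus _ _ _ _ _ (derivable_pt_lim_plus _ _ _ _ _ H1 H2) H3).
  assert (E : 0 + c * 1 + e * (INR 2 * 0 ^ Init.Nat.pred 2) = c) by (simpl; ring).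
  rewrite E in H4. exact H4.
Qed.

Lemma dquad (a c e a' c' e' : R) :
  derivable_pt_lim (fun s => (a + c * s + e * s ^ 2) * (a' + c' * s + e' * s ^ 2)) 0 (c * a' + a * c').
Proof.
  assert (H := derivable_pt_lim_mult _ _ _ _ _ (dlin a c e) (dlin a' c' e')).
  assert (E : c * (a' + c' * 0 + e' * 0 ^ 2) + (a + c * 0 + e * 0 ^ 2) * c' = c * a' + a * c') by ring.
  cbv beta in H. rewrite E in H. exact H.
Qed.

Lemma Kp_quad' r b s i j :
  Kp (fadd r (fscale s b)) i j = Kp r i j + Kp2 r b i j * s + Kp b i j * s ^ 2.
Proof. rewrite Kp_quad. ring. Qed.

Lemma dLK r b : derivable_pt_lim (fun s => LK (fadd r (fscale s b))) 0 (DK r b).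
Proof.
  unfold LK, DK.
  apply (derivable_pt_lim_scal (fun s => sumL (fun i => sumL (fun j => Kp (fadd r (fscale s b)) i j * Kp (fadd r (fscale s b)) j i) idx) idx)).
  apply (dsumL (fun i s => sumL (fun j => Kp (fadd r (fscale s b)) i j * Kp (fadd r (fscale s b)) j i) idx)).
  intros i _.
  apply (dsumL (fun j s => Kp (fadd r (fscale s b)) i j * Kp (fadd r (fscale s b)) j i)).
  intros j _.
  assert (E : (fun s => Kp (fadd r (fscale s b)) i j * Kp (fadd r (fscale s b)) j i) =
     (fun s => (Kp r i j + Kp2 r b i j * s + Kp b i j * s ^ 2) * (Kp r j i + Kp2 r b j i * s + Kp b j i * s ^ 2))).
  { apply FunctionalExtensionality.functional_extensionality; intros s. rewrite !Kp_quad'. reflexivity. }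
  rewrite E. apply dquad.
Qed.

Definition sgn (x : R) : R := if Rlt_dec 0 x then 1 else -1.
Definition Cf (w r : Form) : R := orient w * sgn (LK r) / (2 * sqrt (Rabs (LK r))).

Lemma Dphi w r b : isForm 3 r -> isForm 3 b -> LK r <> 0 ->
  derivable_pt_lim (fun s => phi w (fadd r (fscale s b))) 0 (Cf w r * DK r b).
Proof.
  intros Hr Hb Hl.
  assert (E : (fun s => phi w (fadd r (fscale s b))) =
              mult_real_fct (orient w) (comp sqrt (comp Rabs (fun s => LK (fadd r (fscale s b)))))).
  { apply functional_extensionality; intros s. unfold phi, mult_real_fct, comp.
    rewrite lam_LK by (apply isForm3_add; auto). reflexivity. }
  rewrite E.
  assert (H0 : LK (fadd r (fscale 0 b)) = LK r).
  { apply LK_ext. intros S _. unfold fadd, fscale. ring. }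
  assert (Hs : 0 < Rabs (LK r)) by (apply Rabs_pos_lt; auto).
  assert (HA : derivable_pt_lim (comp Rabs (fun s => LK (fadd r (fscale s b)))) 0 (sgn (LK r) * DK r b)).
  { apply derivable_pt_lim_comp. apply dLK. rewrite H0. unfold sgn.
    destruct (Rlt_dec 0 (LK r)) as [Hp|Hn].
    - apply Rabs_derive_1; auto.
    - apply Rabs_derive_2. lra. }
  assert (Hq : derivable_pt_lim sqrt (comp Rabs (fun s => LK (fadd r (fscale s b))) 0) (/ (2 * sqrt (Rabs (LK r))))).
  { unfold comp. rewrite H0. apply derivable_pt_lim_sqrt; auto. }
  assert (HS := derivable_pt_lim_comp _ _ _ _ _ HA Hq).
  assert (HM := derivable_pt_lim_scal _ (orient w) _ _ HS).
  replace (Cf w r * DK r b) with (orient w * (/ (2 * sqrt (Rabs (LK r))) * (sgn (LK r) * DK r b))).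
  - exact HM.
  - unfold Cf. field. apply Rgt_not_eq, sqrt_lt_R0; auto.
Qed.

Definition signZ (n : nat) : Z := if Nat.even n then 1%Z else (-1)%Z.
Lemma pow_m1 n : (-1) ^ n = IZR (signZ n).
Proof.
  induction n as [|n IH]; [reflexivity|].
  rewrite <- tech_pow_Rmult, IH. unfold signZ. rewrite Nat.even_succ, <- Nat.negb_even.
  destruct (Nat.even n); simpl; lra.
Qed.

Definition sumLZ (f : nat -> Z) (l : list nat) : Z := fold_right (fun x acc => (f x + acc)%Z) 0%Z l.
Lemma sumL_IZR (f : nat -> R) (g : nat -> Z) l : (forall x, f x = IZR (g x)) -> sumL f l = IZR (sumLZ g l).
Proof. intros H; induction l; simpl; [reflexivity|]. rewrite H, IHl, plus_IZR; reflexivity. Qed.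

Definition wedgeZ (a b : nat -> Z) (S : nat) : Z :=
  sumLZ (fun A => if Nat.eqb (Nat.land A S) A
                 then (signZ (inversions A (S - A)%nat) * a A * b (S - A)%nat)%Z else 0%Z) masks.
Lemma wedge_IZR a b a' b' : (forall S, a S = IZR (a' S)) -> (forall S, b S = IZR (b' S)) ->
  forall T, wedge a b T = IZR (wedgeZ a' b' T).
Proof.
  intros Ha Hb T. unfold wedge, wedgeZ. apply sumL_IZR. intros A.
  destruct (Nat.eqb (Nat.land A T) A); [|reflexivity].
  rewrite pow_m1, Ha, Hb, !mult_IZR. reflexivity.
Qed.

Definition monoZ (l : list nat) : nat -> Z := fun S =>
  if Nat.eqb S (fold_right (fun i acc => (2 ^ i + acc)%nat) 0%nat l) then 1%Z else 0%Z.
Lemma mono_IZR l S : mono l S = IZR (monoZ l S).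
Proof. unfold mono, monoZ. destruct (Nat.eqb _ _); reflexivity. Qed.

Definition cstZ (i j k : nat) : Z :=
  match i, j, k with
  | 0%nat, 1%nat, 2%nat => 1 | 1%nat, 0%nat, 2%nat => -1
  | 3%nat, 4%nat, 5%nat => 1 | 4%nat, 3%nat, 5%nat => -1
  | _, _, _ => 0 end.
Lemma cst_IZR i j k : cst i j k = IZR (cstZ i j k).
Proof.
  unfold cst, cstZ.
  destruct i as [|[|[|[|[|i]]]]]; destruct j as [|[|[|[|[|j]]]]]; destruct k as [|[|[|[|[|[|k]]]]]]; reflexivity.
Qed.

Definition d1Z (k : nat) : nat -> Z := fun S =>
  match bits S with
  | [i; j] => (- cstZ i j k)%Z
  | _ => 0%Z end.
Lemma d1_IZR k S : d1 k S = IZR (d1Z k S).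
Proof.
  unfold d1, d1Z. destruct (bits S) as [|i [|j [|x l]]]; try reflexivity.
  rewrite cst_IZR, opp_IZR. reflexivity.
Qed.

Fixpoint dmonoZ (l : list nat) : nat -> Z :=
  match l with
  | [] => fun _ => 0%Z
  | i :: l' => fun S => (wedgeZ (d1Z i) (monoZ l') S + (-1) * wedgeZ (monoZ [i]) (dmonoZ l') S)%Z
  end.
Lemma dmono_IZR l S : dmono l S = IZR (dmonoZ l S).
Proof.
  revert S; induction l as [|i l IH]; intros S; simpl; [reflexivity|].
  unfold fadd, fscale. rewrite (wedge_IZR _ _ (d1Z i) (monoZ l)) by (intros; apply d1_IZR || apply mono_IZR).
  rewrite (wedge_IZR _ _ (monoZ [i]) (dmonoZ l)) by (intros; apply mono_IZR || apply IH).
  rewrite plus_IZR. f_equal. destruct (wedgeZ (monoZ [i]) (dmonoZ l) S) as [|p|p].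
  - ring.
  - change (Z.neg p) with (- Z.pos p)%Z. rewrite opp_IZR. ring.
  - change (IZR (Z.pos p)) with (IZR (- Z.neg p)%Z). rewrite opp_IZR. ring.
Qed.

Lemma dF_Z a T : dF a T = sumL (fun S => a S * IZR (dmonoZ (bits S) T)) masks.
Proof. unfold dF. apply sumL_ext. intros S _. rewrite dmono_IZR. reflexivity. Qed.

Lemma dF_zero a T (p : nat -> bool) :
  (forall S, (S < 64)%nat -> p S = true -> a S = 0) ->
  forallb (fun S => orb (p S) (Z.eqb (dmonoZ (bits S) T) 0)) masks = true -> dF a T = 0.
Proof.
  intros Hp Hc. rewrite dF_Z. apply sumL_zero. intros S HS.
  rewrite forallb_forall in Hc. specialize (Hc S HS). apply in_masks in HS.
  destruct (p S) eqn:E.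
  - rewrite Hp; auto. ring.
  - simpl in Hc. apply Z.eqb_eq in Hc. rewrite Hc. ring.
Qed.

Lemma dF_zero_all a (p : nat -> bool) (q : nat -> bool) :
  (forall S, (S < 64)%nat -> p S = true -> a S = 0) ->
  forallb (fun T => orb (q T) (forallb (fun S => orb (p S) (Z.eqb (dmonoZ (bits S) T) 0)) masks)) masks = true ->
  forall T, (T < 64)%nat -> q T = false -> dF a T = 0.
Proof.
  intros Hp Hc T HT Hq. apply (dF_zero a T p Hp).
  pose proof (forallb_seq _ _ Hc T HT) as H. cbv beta in H. rewrite Hq in H. exact H.
Qed.

Lemma sumLZ_single_seq (f : nat -> Z) k n a :
  (forall x, In x (seq a n) -> x <> k -> f x = 0%Z) ->
  sumLZ f (seq a n) = if andb (Nat.leb a k) (Nat.ltb k (a + n)) then f k else 0%Z.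
Proof.
  revert a; induction n as [|n IH]; intros a H; simpl.
  - destruct (Nat.leb a k) eqn:E1; destruct (Nat.ltb k (a + 0)) eqn:E2; simpl; try reflexivity.
    apply Nat.leb_le in E1; apply Nat.ltb_lt in E2; lia.
  - rewrite IH by (intros x Hx Hk; apply H; [right; auto|auto]).
    destruct (Nat.eq_dec a k) as [->|Hne].
    + rewrite (Nat.leb_refl k). replace (Nat.leb (S k) k) with false by (symmetry; apply Nat.leb_gt; lia).
      replace (Nat.ltb k (k + S n)) with true by (symmetry; apply Nat.ltb_lt; lia). simpl. lia.
    + rewrite (H a (or_introl eq_refl) Hne).
      destruct (Nat.leb a k) eqn:E1; destruct (Nat.leb (S a) k) eqn:E2;
      destruct (Nat.ltb k (S a + n)) eqn:E3; destruct (Nat.ltb k (a + S n)) eqn:E4; simpl; try lia;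
      repeat match goal with H : Nat.leb _ _ = true |- _ => apply Nat.leb_le in H
                        | H : Nat.leb _ _ = false |- _ => apply Nat.leb_gt in H
                        | H : Nat.ltb _ _ = true |- _ => apply Nat.ltb_lt in H
                        | H : Nat.ltb _ _ = false |- _ => apply Nat.ltb_ge in H end; lia.
Qed.

Lemma sumLZ_single (f : nat -> Z) k :
  (k < 64)%nat -> (forall x, (x < 64)%nat -> x <> k -> f x = 0%Z) -> sumLZ f masks = f k.
Proof.
  intros Hk H. unfold masks. rewrite (sumLZ_single_seq f k).
  - replace (Nat.leb 0 k) with true by (symmetry; apply Nat.leb_le; lia).
    replace (Nat.ltb k (0 + 64)) with true by (symmetry; apply Nat.ltb_lt; lia). reflexivity.
  - intros x Hx. rewrite in_seq in Hx. apply H; lia.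
Qed.

Definition d1F (i A : nat) : Z :=
  if Nat.eqb i 2 then (if Nat.eqb A 3 then (-1)%Z else 0%Z)
  else if Nat.eqb i 5 then (if Nat.eqb A 24 then (-1)%Z else 0%Z) else 0%Z.

Lemma d1F_eq i A : (i < 6)%nat -> (A < 64)%nat -> d1Z i A = d1F i A.
Proof.
  intros Hi HA.
  assert (H : forallb (fun i => forallb (fun A => Z.eqb (d1Z i A) (d1F i A)) (seq 0 64)) (seq 0 6) = true)
    by (vm_compute; reflexivity).
  pose proof (forallb_seq _ _ H i Hi) as H1. cbv beta in H1.
  pose proof (forallb_seq _ _ H1 A HA) as H2. cbv beta in H2. apply Z.eqb_eq; exact H2.
Qed.

Definition w1F (i : nat) (b : nat -> Z) (S : nat) : Z :=
  if Nat.eqb i 2 then (if Nat.eqb (Nat.land 3 S) 3 then (signZ (inversions 3 (S - 3)) * (-1) * b (S - 3)%nat)%Z else 0%Z)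
  else if Nat.eqb i 5 then (if Nat.eqb (Nat.land 24 S) 24 then (signZ (inversions 24 (S - 24)) * (-1) * b (S - 24)%nat)%Z else 0%Z)
  else 0%Z.

Lemma sumLZ_zero (f : nat -> Z) l : (forall x, In x l -> f x = 0%Z) -> sumLZ f l = 0%Z.
Proof. induction l; simpl; intros H; auto. rewrite H, IHl; auto. Qed.

Lemma wedge_d1 i b S : (i < 6)%nat -> (S < 64)%nat -> wedgeZ (d1Z i) b S = w1F i b S.
Proof.
  intros Hi HS. unfold wedgeZ, w1F.
  destruct (Nat.eqb i 2) eqn:E2; [|destruct (Nat.eqb i 5) eqn:E5].
  - rewrite (sumLZ_single _ 3) by (try lia; intros x Hx Hne; destruct (Nat.eqb (Nat.land x S) x); auto;
      rewrite d1F_eq by auto; unfold d1F; rewrite E2; apply Nat.eqb_neq in Hne; rewrite Hne; lia).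
    rewrite d1F_eq by (auto; lia). unfold d1F. rewrite E2. reflexivity.
  - rewrite (sumLZ_single _ 24) by (try lia; intros x Hx Hne; destruct (Nat.eqb (Nat.land x S) x); auto;
      rewrite d1F_eq by auto; unfold d1F; rewrite E2, E5; apply Nat.eqb_neq in Hne; rewrite Hne; lia).
    rewrite d1F_eq by (auto; lia). unfold d1F. rewrite E2, E5. reflexivity.
  - apply sumLZ_zero. intros x Hx. apply in_masks in Hx. destruct (Nat.eqb (Nat.land x S) x); auto.
    rewrite d1F_eq by auto. unfold d1F. rewrite E2, E5. lia.
Qed.

Lemma pow2_lt i : (i < 6)%nat -> (2 ^ i + 0 < 64)%nat.
Proof. intros H. do 6 (destruct i as [|i]; [simpl; lia|]). lia. Qed.

Lemma wedge_mono1 i b S : (i < 6)%nat -> (S < 64)%nat ->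
  wedgeZ (monoZ [i]) b S =
  if Nat.eqb (Nat.land (2 ^ i + 0) S) (2 ^ i + 0)
  then (signZ (inversions (2 ^ i + 0) (S - (2 ^ i + 0))) * 1 * b (S - (2 ^ i + 0))%nat)%Z else 0%Z.
Proof.
  intros Hi HS. unfold wedgeZ. rewrite (sumLZ_single _ (2 ^ i + 0)).
  - unfold monoZ. simpl fold_right. rewrite Nat.eqb_refl. reflexivity.
  - apply pow2_lt; auto.
  - intros x Hx Hne. destruct (Nat.eqb (Nat.land x S) x); auto. unfold monoZ. simpl fold_right.
    apply Nat.eqb_neq in Hne. rewrite Hne. lia.
Qed.

Fixpoint dmonoF (l : list nat) (S : nat) : Z :=
  match l with
  | [] => 0%Z
  | i :: l' => (w1F i (monoZ l') S + (-1) *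
      (if Nat.eqb (Nat.land (2 ^ i + 0) S) (2 ^ i + 0)
       then signZ (inversions (2 ^ i + 0) (S - (2 ^ i + 0))) * 1 * dmonoF l' (S - (2 ^ i + 0))%nat else 0))%Z
  end.

Lemma dmonoF_eq l S : Forall (fun x => (x < 6)%nat) l -> (S < 64)%nat -> dmonoZ l S = dmonoF l S.
Proof.
  revert S. induction l as [|i l IH]; intros S Hl HS; [reflexivity|].
  inversion Hl; subst. simpl dmonoZ. simpl dmonoF.
  rewrite wedge_d1 by auto. rewrite wedge_mono1 by auto.
  destruct (Nat.eqb (Nat.land (2 ^ i + 0) S) (2 ^ i + 0)); [|reflexivity].
  rewrite IH by (auto; lia). reflexivity.
Qed.

Lemma bits_lt6 S : Forall (fun x => (x < 6)%nat) (bits S).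
Proof.
  apply Forall_forall. intros x Hx. unfold bits in Hx. apply filter_In in Hx. destruct Hx as [Hx _].
  apply in_idx; auto.
Qed.

Lemma dF_F a T : (T < 64)%nat -> dF a T = sumL (fun S => a S * IZR (dmonoF (bits S) T)) masks.
Proof.
  intros HT. rewrite dF_Z. apply sumL_ext. intros S _. rewrite dmonoF_eq; auto using bits_lt6.
Qed.

Lemma dF_zeroF a T (p : nat -> bool) : (T < 64)%nat ->
  (forall S, (S < 64)%nat -> p S = true -> a S = 0) ->
  forallb (fun S => if p S then true else Z.eqb (dmonoF (bits S) T) 0) masks = true -> dF a T = 0.
Proof.
  intros HT Hp Hc. rewrite dF_F by auto. apply sumL_zero. intros S HS.
  rewrite forallb_forall in Hc. specialize (Hc S HS). apply in_masks in HS.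
  destruct (p S) eqn:E.
  - rewrite Hp; auto. ring.
  - apply Z.eqb_eq in Hc. rewrite Hc. ring.
Qed.

Lemma dF_zero_allF a (p : nat -> bool) (q : nat -> bool) :
  (forall S, (S < 64)%nat -> p S = true -> a S = 0) ->
  forallb (fun T => if q T then true else forallb (fun S => if p S then true else Z.eqb (dmonoF (bits S) T) 0) masks) masks = true ->
  forall T, (T < 64)%nat -> q T = false -> dF a T = 0.
Proof.
  intros Hp Hc T HT Hq. apply (dF_zeroF a T p HT Hp).
  pose proof (forallb_seq _ _ Hc T HT) as H. cbv beta in H. rewrite Hq in H. exact H.
Qed.


Definition Kl (r b : Form) (i j : nat) : R :=
  match i, j with
  | 0%nat, 0%nat => (r 7%nat * b 56%nat + b 7%nat * r 56%nat) + (-1) * (r 11%nat * b 52%nat + b 11%nat * r 52%nat) + (r 13%nat * b 50%nat + b 13%nat * r 50%nat) + (r 14%nat * b 49%nat + b 14%nat * r 49%nat) + (r 19%nat * b 44%nat + b 19%nat * r 44%nat) + (-1) * (r 21%nat * b 42%nat + b 21%nat * r 42%nat) + (-1) * (r 22%nat * b 41%nat + b 22%nat * r 41%nat) + (r 25%nat * b 38%nat + b 25%nat * r 38%nat) + (r 26%nat * b 37%nat + b 26%nat * r 37%nat) + (-1) * (r 28%nat * b 35%nat + b 28%nat * r 35%nat)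
  | 0%nat, 1%nat => (2) * (r 14%nat * b 50%nat + b 14%nat * r 50%nat) + (-2) * (r 22%nat * b 42%nat + b 22%nat * r 42%nat) + (2) * (r 26%nat * b 38%nat + b 26%nat * r 38%nat)
  | 0%nat, 2%nat => (2) * (r 14%nat * b 52%nat + b 14%nat * r 52%nat) + (-2) * (r 22%nat * b 44%nat + b 22%nat * r 44%nat) + (2) * (r 28%nat * b 38%nat + b 28%nat * r 38%nat)
  | 0%nat, 3%nat => (2) * (r 14%nat * b 56%nat + b 14%nat * r 56%nat) + (-2) * (r 26%nat * b 44%nat + b 26%nat * r 44%nat) + (2) * (r 28%nat * b 42%nat + b 28%nat * r 42%nat)
  | 0%nat, 4%nat => (2) * (r 22%nat * b 56%nat + b 22%nat * r 56%nat) + (-2) * (r 26%nat * b 52%nat + b 26%nat * r 52%nat) + (2) * (r 28%nat * b 50%nat + b 28%nat * r 50%nat)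
  | 0%nat, 5%nat => (2) * (r 38%nat * b 56%nat + b 38%nat * r 56%nat) + (-2) * (r 42%nat * b 52%nat + b 42%nat * r 52%nat) + (2) * (r 44%nat * b 50%nat + b 44%nat * r 50%nat)
  | 1%nat, 0%nat => (-2) * (r 13%nat * b 49%nat + b 13%nat * r 49%nat) + (2) * (r 21%nat * b 41%nat + b 21%nat * r 41%nat) + (-2) * (r 25%nat * b 37%nat + b 25%nat * r 37%nat)
  | 1%nat, 1%nat => (r 7%nat * b 56%nat + b 7%nat * r 56%nat) + (-1) * (r 11%nat * b 52%nat + b 11%nat * r 52%nat) + (-1) * (r 13%nat * b 50%nat + b 13%nat * r 50%nat) + (-1) * (r 14%nat * b 49%nat + b 14%nat * r 49%nat) + (r 19%nat * b 44%nat + b 19%nat * r 44%nat) + (r 21%nat * b 42%nat + b 21%nat * r 42%nat) + (r 22%nat * b 41%nat + b 22%nat * r 41%nat) + (-1) * (r 25%nat * b 38%nat + b 25%nat * r 38%nat) + (-1) * (r 26%nat * b 37%nat + b 26%nat * r 37%nat) + (-1) * (r 28%nat * b 35%nat + b 28%nat * r 35%nat)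
  | 1%nat, 2%nat => (-2) * (r 13%nat * b 52%nat + b 13%nat * r 52%nat) + (2) * (r 21%nat * b 44%nat + b 21%nat * r 44%nat) + (-2) * (r 28%nat * b 37%nat + b 28%nat * r 37%nat)
  | 1%nat, 3%nat => (-2) * (r 13%nat * b 56%nat + b 13%nat * r 56%nat) + (2) * (r 25%nat * b 44%nat + b 25%nat * r 44%nat) + (-2) * (r 28%nat * b 41%nat + b 28%nat * r 41%nat)
  | 1%nat, 4%nat => (-2) * (r 21%nat * b 56%nat + b 21%nat * r 56%nat) + (2) * (r 25%nat * b 52%nat + b 25%nat * r 52%nat) + (-2) * (r 28%nat * b 49%nat + b 28%nat * r 49%nat)
  | 1%nat, 5%nat => (-2) * (r 37%nat * b 56%nat + b 37%nat * r 56%nat) + (2) * (r 41%nat * b 52%nat + b 41%nat * r 52%nat) + (-2) * (r 44%nat * b 49%nat + b 44%nat * r 49%nat)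
  | 2%nat, 0%nat => (2) * (r 11%nat * b 49%nat + b 11%nat * r 49%nat) + (-2) * (r 19%nat * b 41%nat + b 19%nat * r 41%nat) + (2) * (r 25%nat * b 35%nat + b 25%nat * r 35%nat)
  | 2%nat, 1%nat => (2) * (r 11%nat * b 50%nat + b 11%nat * r 50%nat) + (-2) * (r 19%nat * b 42%nat + b 19%nat * r 42%nat) + (2) * (r 26%nat * b 35%nat + b 26%nat * r 35%nat)
  | 2%nat, 2%nat => (r 7%nat * b 56%nat + b 7%nat * r 56%nat) + (r 11%nat * b 52%nat + b 11%nat * r 52%nat) + (r 13%nat * b 50%nat + b 13%nat * r 50%nat) + (-1) * (r 14%nat * b 49%nat + b 14%nat * r 49%nat) + (-1) * (r 19%nat * b 44%nat + b 19%nat * r 44%nat) + (-1) * (r 21%nat * b 42%nat + b 21%nat * r 42%nat) + (r 22%nat * b 41%nat + b 22%nat * r 41%nat) + (-1) * (r 25%nat * b 38%nat + b 25%nat * r 38%nat) + (r 26%nat * b 37%nat + b 26%nat * r 37%nat) + (r 28%nat * b 35%nat + b 28%nat * r 35%nat)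
  | 2%nat, 3%nat => (2) * (r 11%nat * b 56%nat + b 11%nat * r 56%nat) + (-2) * (r 25%nat * b 42%nat + b 25%nat * r 42%nat) + (2) * (r 26%nat * b 41%nat + b 26%nat * r 41%nat)
  | 2%nat, 4%nat => (2) * (r 19%nat * b 56%nat + b 19%nat * r 56%nat) + (-2) * (r 25%nat * b 50%nat + b 25%nat * r 50%nat) + (2) * (r 26%nat * b 49%nat + b 26%nat * r 49%nat)
  | 2%nat, 5%nat => (2) * (r 35%nat * b 56%nat + b 35%nat * r 56%nat) + (-2) * (r 41%nat * b 50%nat + b 41%nat * r 50%nat) + (2) * (r 42%nat * b 49%nat + b 42%nat * r 49%nat)
  | 3%nat, 0%nat => (-2) * (r 7%nat * b 49%nat + b 7%nat * r 49%nat) + (2) * (r 19%nat * b 37%nat + b 19%nat * r 37%nat) + (-2) * (r 21%nat * b 35%nat + b 21%nat * r 35%nat)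
  | 3%nat, 1%nat => (-2) * (r 7%nat * b 50%nat + b 7%nat * r 50%nat) + (2) * (r 19%nat * b 38%nat + b 19%nat * r 38%nat) + (-2) * (r 22%nat * b 35%nat + b 22%nat * r 35%nat)
  | 3%nat, 2%nat => (-2) * (r 7%nat * b 52%nat + b 7%nat * r 52%nat) + (2) * (r 21%nat * b 38%nat + b 21%nat * r 38%nat) + (-2) * (r 22%nat * b 37%nat + b 22%nat * r 37%nat)
  | 3%nat, 3%nat => (-1) * (r 7%nat * b 56%nat + b 7%nat * r 56%nat) + (-1) * (r 11%nat * b 52%nat + b 11%nat * r 52%nat) + (r 13%nat * b 50%nat + b 13%nat * r 50%nat) + (-1) * (r 14%nat * b 49%nat + b 14%nat * r 49%nat) + (-1) * (r 19%nat * b 44%nat + b 19%nat * r 44%nat) + (r 21%nat * b 42%nat + b 21%nat * r 42%nat) + (-1) * (r 22%nat * b 41%nat + b 22%nat * r 41%nat) + (r 25%nat * b 38%nat + b 25%nat * r 38%nat) + (-1) * (r 26%nat * b 37%nat + b 26%nat * r 37%nat) + (r 28%nat * b 35%nat + b 28%nat * r 35%nat)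
  | 3%nat, 4%nat => (-2) * (r 19%nat * b 52%nat + b 19%nat * r 52%nat) + (2) * (r 21%nat * b 50%nat + b 21%nat * r 50%nat) + (-2) * (r 22%nat * b 49%nat + b 22%nat * r 49%nat)
  | 3%nat, 5%nat => (-2) * (r 35%nat * b 52%nat + b 35%nat * r 52%nat) + (2) * (r 37%nat * b 50%nat + b 37%nat * r 50%nat) + (-2) * (r 38%nat * b 49%nat + b 38%nat * r 49%nat)
  | 4%nat, 0%nat => (2) * (r 7%nat * b 41%nat + b 7%nat * r 41%nat) + (-2) * (r 11%nat * b 37%nat + b 11%nat * r 37%nat) + (2) * (r 13%nat * b 35%nat + b 13%nat * r 35%nat)
  | 4%nat, 1%nat => (2) * (r 7%nat * b 42%nat + b 7%nat * r 42%nat) + (-2) * (r 11%nat * b 38%nat + b 11%nat * r 38%nat) + (2) * (r 14%nat * b 35%nat + b 14%nat * r 35%nat)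
  | 4%nat, 2%nat => (2) * (r 7%nat * b 44%nat + b 7%nat * r 44%nat) + (-2) * (r 13%nat * b 38%nat + b 13%nat * r 38%nat) + (2) * (r 14%nat * b 37%nat + b 14%nat * r 37%nat)
  | 4%nat, 3%nat => (2) * (r 11%nat * b 44%nat + b 11%nat * r 44%nat) + (-2) * (r 13%nat * b 42%nat + b 13%nat * r 42%nat) + (2) * (r 14%nat * b 41%nat + b 14%nat * r 41%nat)
  | 4%nat, 4%nat => (-1) * (r 7%nat * b 56%nat + b 7%nat * r 56%nat) + (r 11%nat * b 52%nat + b 11%nat * r 52%nat) + (-1) * (r 13%nat * b 50%nat + b 13%nat * r 50%nat) + (r 14%nat * b 49%nat + b 14%nat * r 49%nat) + (r 19%nat * b 44%nat + b 19%nat * r 44%nat) + (-1) * (r 21%nat * b 42%nat + b 21%nat * r 42%nat) + (r 22%nat * b 41%nat + b 22%nat * r 41%nat) + (r 25%nat * b 38%nat + b 25%nat * r 38%nat) + (-1) * (r 26%nat * b 37%nat + b 26%nat * r 37%nat) + (r 28%nat * b 35%nat + b 28%nat * r 35%nat)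
  | 4%nat, 5%nat => (2) * (r 35%nat * b 44%nat + b 35%nat * r 44%nat) + (-2) * (r 37%nat * b 42%nat + b 37%nat * r 42%nat) + (2) * (r 38%nat * b 41%nat + b 38%nat * r 41%nat)
  | 5%nat, 0%nat => (-2) * (r 7%nat * b 25%nat + b 7%nat * r 25%nat) + (2) * (r 11%nat * b 21%nat + b 11%nat * r 21%nat) + (-2) * (r 13%nat * b 19%nat + b 13%nat * r 19%nat)
  | 5%nat, 1%nat => (-2) * (r 7%nat * b 26%nat + b 7%nat * r 26%nat) + (2) * (r 11%nat * b 22%nat + b 11%nat * r 22%nat) + (-2) * (r 14%nat * b 19%nat + b 14%nat * r 19%nat)
  | 5%nat, 2%nat => (-2) * (r 7%nat * b 28%nat + b 7%nat * r 28%nat) + (2) * (r 13%nat * b 22%nat + b 13%nat * r 22%nat) + (-2) * (r 14%nat * b 21%nat + b 14%nat * r 21%nat)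
  | 5%nat, 3%nat => (-2) * (r 11%nat * b 28%nat + b 11%nat * r 28%nat) + (2) * (r 13%nat * b 26%nat + b 13%nat * r 26%nat) + (-2) * (r 14%nat * b 25%nat + b 14%nat * r 25%nat)
  | 5%nat, 4%nat => (-2) * (r 19%nat * b 28%nat + b 19%nat * r 28%nat) + (2) * (r 21%nat * b 26%nat + b 21%nat * r 26%nat) + (-2) * (r 22%nat * b 25%nat + b 22%nat * r 25%nat)
  | 5%nat, 5%nat => (-1) * (r 7%nat * b 56%nat + b 7%nat * r 56%nat) + (r 11%nat * b 52%nat + b 11%nat * r 52%nat) + (-1) * (r 13%nat * b 50%nat + b 13%nat * r 50%nat) + (r 14%nat * b 49%nat + b 14%nat * r 49%nat) + (-1) * (r 19%nat * b 44%nat + b 19%nat * r 44%nat) + (r 21%nat * b 42%nat + b 21%nat * r 42%nat) + (-1) * (r 22%nat * b 41%nat + b 22%nat * r 41%nat) + (-1) * (r 25%nat * b 38%nat + b 25%nat * r 38%nat) + (r 26%nat * b 37%nat + b 26%nat * r 37%nat) + (-1) * (r 28%nat * b 35%nat + b 28%nat * r 35%nat)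
  | _, _ => 0 end.


Lemma Kp2_Kl r b i j : Kp2 r b i j = Kl r b i j.
Proof. unfold Kp2. destr6 i; destr6 j; cbv beta iota delta [Kp Kl fadd]; ring. Qed.

Definition DKl (r b : Form) : R :=
  / 6 * sumL (fun i => sumL (fun j => Kl r b i j * Kp r j i + Kp r i j * Kl r b j i) idx) idx.

Lemma DK_DKl r b : DK r b = DKl r b.
Proof.
  unfold DK, DKl. f_equal. apply sumL_ext; intros i _. apply sumL_ext; intros j _. rewrite !Kp2_Kl. reflexivity.
Qed.

Lemma LK_shift (r g : Form) t : LK (fadd (cr r) (fscale t (cg g))) = LK (cr r).
Proof.
  unfold LK. f_equal. cbv beta iota delta [cr cg orb sumL idx seq fold_right Kp fadd fscale Nat.eqb]. ring.
Qed.

Lemma DK_shift_7 (r g : Form) t : DK (fadd (cr r) (fscale t (cg g))) (eB 7) = DK (cr r) (eB 7).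
Proof.
  rewrite !DK_DKl. unfold DKl. f_equal. cbv beta iota delta [cr cg orb Kl eB sumL idx seq fold_right Kp fadd fscale Nat.eqb]. ring.
Qed.

Lemma DK_shift_13 (r g : Form) t : DK (fadd (cr r) (fscale t (cg g))) (eB 13) = DK (cr r) (eB 13).
Proof.
  rewrite !DK_DKl. unfold DKl. f_equal. cbv beta iota delta [cr cg orb Kl eB sumL idx seq fold_right Kp fadd fscale Nat.eqb]. ring.
Qed.

Lemma DK_shift_14 (r g : Form) t : DK (fadd (cr r) (fscale t (cg g))) (eB 14) = DK (cr r) (eB 14).
Proof.
  rewrite !DK_DKl. unfold DKl. f_equal. cbv beta iota delta [cr cg orb Kl eB sumL idx seq fold_right Kp fadd fscale Nat.eqb]. ring.
Qed.

Lemma DK_shift_21 (r g : Form) t : DK (fadd (cr r) (fscale t (cg g))) (eB 21) = DK (cr r) (eB 21).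
Proof.
  rewrite !DK_DKl. unfold DKl. f_equal. cbv beta iota delta [cr cg orb Kl eB sumL idx seq fold_right Kp fadd fscale Nat.eqb]. ring.
Qed.

Lemma DK_shift_22 (r g : Form) t : DK (fadd (cr r) (fscale t (cg g))) (eB 22) = DK (cr r) (eB 22).
Proof.
  rewrite !DK_DKl. unfold DKl. f_equal. cbv beta iota delta [cr cg orb Kl eB sumL idx seq fold_right Kp fadd fscale Nat.eqb]. ring.
Qed.

Lemma DK_shift_28 (r g : Form) t : DK (fadd (cr r) (fscale t (cg g))) (eB 28) = DK (cr r) (eB 28).
Proof.
  rewrite !DK_DKl. unfold DKl. f_equal. cbv beta iota delta [cr cg orb Kl eB sumL idx seq fold_right Kp fadd fscale Nat.eqb]. ring.
Qed.

Lemma DK_shift_35 (r g : Form) t : DK (fadd (cr r) (fscale t (cg g))) (eB 35) = DK (cr r) (eB 35).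
Proof.
  rewrite !DK_DKl. unfold DKl. f_equal. cbv beta iota delta [cr cg orb Kl eB sumL idx seq fold_right Kp fadd fscale Nat.eqb]. ring.
Qed.

Lemma DK_shift_41 (r g : Form) t : DK (fadd (cr r) (fscale t (cg g))) (eB 41) = DK (cr r) (eB 41).
Proof.
  rewrite !DK_DKl. unfold DKl. f_equal. cbv beta iota delta [cr cg orb Kl eB sumL idx seq fold_right Kp fadd fscale Nat.eqb]. ring.
Qed.

Lemma DK_shift_42 (r g : Form) t : DK (fadd (cr r) (fscale t (cg g))) (eB 42) = DK (cr r) (eB 42).
Proof.
  rewrite !DK_DKl. unfold DKl. f_equal. cbv beta iota delta [cr cg orb Kl eB sumL idx seq fold_right Kp fadd fscale Nat.eqb]. ring.
Qed.

Lemma DK_shift_49 (r g : Form) t : DK (fadd (cr r) (fscale t (cg g))) (eB 49) = DK (cr r) (eB 49).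
Proof.
  rewrite !DK_DKl. unfold DKl. f_equal. cbv beta iota delta [cr cg orb Kl eB sumL idx seq fold_right Kp fadd fscale Nat.eqb]. ring.
Qed.

Lemma DK_shift_50 (r g : Form) t : DK (fadd (cr r) (fscale t (cg g))) (eB 50) = DK (cr r) (eB 50).
Proof.
  rewrite !DK_DKl. unfold DKl. f_equal. cbv beta iota delta [cr cg orb Kl eB sumL idx seq fold_right Kp fadd fscale Nat.eqb]. ring.
Qed.

Lemma DK_shift_56 (r g : Form) t : DK (fadd (cr r) (fscale t (cg g))) (eB 56) = DK (cr r) (eB 56).
Proof.
  rewrite !DK_DKl. unfold DKl. f_equal. cbv beta iota delta [cr cg orb Kl eB sumL idx seq fold_right Kp fadd fscale Nat.eqb]. ring.
Qed.

Lemma DK_U3_11 (r : Form) : DK (cr r) (eB 11) = 0.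
Proof.
  rewrite DK_DKl. unfold DKl. cbv beta iota delta [cr cg orb Kl eB sumL idx seq fold_right Kp fadd fscale Nat.eqb]. ring.
Qed.

Lemma DK_U3_19 (r : Form) : DK (cr r) (eB 19) = 0.
Proof.
  rewrite DK_DKl. unfold DKl. cbv beta iota delta [cr cg orb Kl eB sumL idx seq fold_right Kp fadd fscale Nat.eqb]. ring.
Qed.

Lemma DK_U3_25 (r : Form) : DK (cr r) (eB 25) = 0.
Proof.
  rewrite DK_DKl. unfold DKl. cbv beta iota delta [cr cg orb Kl eB sumL idx seq fold_right Kp fadd fscale Nat.eqb]. ring.
Qed.

Lemma DK_U3_26 (r : Form) : DK (cr r) (eB 26) = 0.
Proof.
  rewrite DK_DKl. unfold DKl. cbv beta iota delta [cr cg orb Kl eB sumL idx seq fold_right Kp fadd fscale Nat.eqb]. ring.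
Qed.

Definition M3 : list nat := [7%nat; 11%nat; 13%nat; 14%nat; 19%nat; 21%nat; 22%nat; 25%nat; 26%nat; 28%nat; 35%nat; 37%nat; 38%nat; 41%nat; 42%nat; 44%nat; 49%nat; 50%nat; 52%nat; 56%nat].

Lemma Kl_lin r b i j : Kl r b i j = sumL (fun B => b B * Kl r (eB B) i j) M3.
Proof.
  destr6 i; destr6 j; cbv beta iota delta [M3 sumL fold_right eB Kl Nat.eqb]; ring.
Qed.

Lemma all64 (P : nat -> Prop) : P 0%nat -> P 1%nat -> P 2%nat -> P 3%nat -> P 4%nat -> P 5%nat -> P 6%nat -> P 7%nat -> P 8%nat -> P 9%nat -> P 10%nat -> P 11%nat -> P 12%nat -> P 13%nat -> P 14%nat -> P 15%nat -> P 16%nat -> P 17%nat -> P 18%nat -> P 19%nat -> P 20%nat -> P 21%nat -> P 22%nat -> P 23%nat -> P 24%nat -> P 25%nat -> P 26%nat -> P 27%nat -> P 28%nat -> P 29%nat -> P 30%nat -> P 31%nat -> P 32%nat -> P 33%nat -> P 34%nat -> P 35%nat -> P 36%nat -> P 37%nat -> P 38%nat -> P 39%nat -> P 40%nat -> P 41%nat -> P 42%nat -> P 43%nat -> P 44%nat -> P 45%nat -> P 46%nat -> P 47%nat -> P 48%nat -> P 49%nat -> P 50%nat -> P 51%nat -> P 52%nat -> P 53%nat -> P 54%nat -> P 55%nat -> P 56%nat -> P 57%nat -> P 58%nat -> P 59%nat -> P 60%nat -> P 61%nat -> P 62%nat -> P 63%nat -> forall S, (S < 64)%nat -> P S.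
Proof.
  intros H0 H1 H2 H3 H4 H5 H6 H7 H8 H9 H10 H11 H12 H13 H14 H15 H16 H17 H18 H19 H20 H21 H22 H23 H24 H25 H26 H27 H28 H29 H30 H31 H32 H33 H34 H35 H36 H37 H38 H39 H40 H41 H42 H43 H44 H45 H46 H47 H48 H49 H50 H51 H52 H53 H54 H55 H56 H57 H58 H59 H60 H61 H62 H63 S HS.
  destruct S as [|S]; [assumption|]. destruct S as [|S]; [assumption|]. destruct S as [|S]; [assumption|]. destruct S as [|S]; [assumption|]. destruct S as [|S]; [assumption|]. destruct S as [|S]; [assumption|]. destruct S as [|S]; [assumption|]. destruct S as [|S]; [assumption|]. destruct S as [|S]; [assumption|]. destruct S as [|S]; [assumption|]. destruct S as [|S]; [assumption|]. destruct S as [|S]; [assumption|]. destruct S as [|S]; [assumption|]. destruct S as [|S]; [assumption|]. destruct S as [|S]; [assumption|]. destruct S as [|S]; [assumption|]. destruct S as [|S]; [assumption|]. destruct S as [|S]; [assumption|]. destruct S as [|S]; [assumption|]. destruct S as [|S]; [assumption|]. destruct S as [|S]; [assumption|]. destruct S as [|S]; [assumption|]. destruct S as [|S]; [assumption|]. destruct S as [|S]; [assumption|]. destruct S as [|S]; [assumption|]. destruct S as [|S]; [assumption|]. destruct S as [|S]; [assumption|]. destruct S as [|S]; [assumption|]. destruct S as [|S]; [assumption|]. destruct S as [|S]; [assumption|]. destruct S as [|S]; [assumption|]. destruct S as [|S]; [assumption|]. destruct S as [|S]; [assumption|]. destruct S as [|S]; [assumption|]. destruct S as [|S]; [assumption|].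 destruct S as [|S]; [assumption|]. destruct S as [|S]; [assumption|]. destruct S as [|S]; [assumption|]. destruct S as [|S]; [assumption|]. destruct S as [|S]; [assumption|]. destruct S as [|S]; [assumption|]. destruct S as [|S]; [assumption|]. destruct S as [|S]; [assumption|]. destruct S as [|S]; [assumption|]. destruct S as [|S]; [assumption|]. destruct S as [|S]; [assumption|]. destruct S as [|S]; [assumption|]. destruct S as [|S]; [assumption|]. destruct S as [|S]; [assumption|]. destruct S as [|S]; [assumption|]. destruct S as [|S]; [assumption|]. destruct S as [|S]; [assumption|]. destruct S as [|S]; [assumption|]. destruct S as [|S]; [assumption|]. destruct S as [|S]; [assumption|]. destruct S as [|S]; [assumption|]. destruct S as [|S]; [assumption|]. destruct S as [|S]; [assumption|]. destruct S as [|S]; [assumption|]. destruct S as [|S]; [assumption|]. destruct S as [|S]; [assumption|]. destruct S as [|S]; [assumption|]. destruct S as [|S]; [assumption|]. destruct S as [|S]; [assumption|].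
  lia.
Qed.

Lemma sumL_single (f : nat -> R) k :
  (k < 64)%nat -> (forall x, (x < 64)%nat -> x <> k -> f x = 0) -> sumL f masks = f k.
Proof.
  intros Hk H. unfold masks.
  assert (G : forall n a, (forall x, In x (seq a n) -> x <> k -> f x = 0) ->
     sumL f (seq a n) = if andb (Nat.leb a k) (Nat.ltb k (a + n)) then f k else 0).
  { induction n as [|n IH]; intros a Ha; simpl.
    - destruct (Nat.leb a k) eqn:E1; destruct (Nat.ltb k (a + 0)) eqn:E2; simpl; try reflexivity.
      apply Nat.leb_le in E1; apply Nat.ltb_lt in E2; lia.
    - rewrite IH by (intros x Hx Hk'; apply Ha; [right; auto|auto]).
      destruct (Nat.eq_dec a k) as [->|Hne].
      + rewrite (Nat.leb_refl k). replace (Nat.leb (S k) k) with false by (symmetry; apply Nat.leb_gt; lia).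
        replace (Nat.ltb k (k + S n)) with true by (symmetry; apply Nat.ltb_lt; lia). simpl. ring.
      + rewrite (Ha a (or_introl eq_refl) Hne).
        destruct (Nat.leb a k) eqn:E1; destruct (Nat.leb (S a) k) eqn:E2;
        destruct (Nat.ltb k (S a + n)) eqn:E3; destruct (Nat.ltb k (a + S n)) eqn:E4; simpl; try ring;
        repeat match goal with H : Nat.leb _ _ = true |- _ => apply Nat.leb_le in H
                          | H : Nat.leb _ _ = false |- _ => apply Nat.leb_gt in H
                          | H : Nat.ltb _ _ = true |- _ => apply Nat.ltb_lt in H
                          | H : Nat.ltb _ _ = false |- _ => apply Nat.ltb_ge in H end; lia. }
  rewrite G.
  - replace (Nat.leb 0 k) with true by (symmetry; apply Nat.leb_le; lia).
    replace (Nat.ltb k (0 + 64)) with true by (symmetry; apply Nat.ltb_lt; lia). reflexivity.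
  - intros x Hx. rewrite in_seq in Hx. apply H; lia.
Qed.

Definition sig (S : nat) : R := (-1) ^ (inversions S (63 - S)).

Lemma sig_sq S : sig S * sig S = 1.
Proof. unfold sig. rewrite <- pow_add, pow_m1. unfold signZ. rewrite Nat.even_add, Bool.eqb_reflx. reflexivity. Qed.

Lemma land63 : forall A, (A < 64)%nat -> Nat.land A 63 = A.
Proof.
  assert (H : forallb (fun A => Nat.eqb (Nat.land A 63) A) (seq 0 64) = true) by (vm_compute; reflexivity).
  intros A HA. apply Nat.eqb_eq. exact (forallb_seq _ _ H A HA).
Qed.

Lemma wedge_eB a B : (B < 64)%nat -> wedge a (eB B) 63%nat = sig (63 - B)%nat * a (63 - B)%nat.
Proof.
  intros HB. unfold wedge. rewrite (sumL_single _ (63 - B)) by (first [lia | intros x Hx Hne;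
    destruct (Nat.eqb (Nat.land x 63) x); [|reflexivity]; unfold eB;
    replace (Nat.eqb (63 - x) B) with false by (symmetry; apply Nat.eqb_neq; lia); ring]).
  rewrite land63 by lia. rewrite Nat.eqb_refl. unfold eB, sig.
  replace (63 - (63 - B))%nat with B by lia. rewrite Nat.eqb_refl. ring.
Qed.

Lemma isForm3_eB B : popcount B = 3%nat -> isForm 3 (eB B).
Proof.
  intros HB S HS Hp. unfold eB. destruct (Nat.eqb S B) eqn:E; [|reflexivity].
  apply Nat.eqb_eq in E; subst; contradiction.
Qed.

(* w0(e2,e5) = 0 *)
Lemma ebasis_centre j : (j = 2 \/ j = 5)%nat -> inCentre (ebasis j).
Proof.
  intros Hj y k Hk. unfold bracket.
  destruct Hj as [->| ->]; cbv beta iota delta [sumL idx seq fold_right ebasis Nat.eqb cst]; ring.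
Qed.

Lemma w36 w0 : (forall z1 z2 : Vec, inCentre z1 -> inCentre z2 -> eval2 w0 z1 z2 = 0) -> w0 36%nat = 0.
Proof.
  intros H. pose proof (H (ebasis 2) (ebasis 5) (ebasis_centre 2 (or_introl eq_refl)) (ebasis_centre 5 (or_intror eq_refl))) as E.
  unfold eval2 in E.
  cbv -[Rplus Rmult Ropp Rinv IZR Rminus Rdiv] in E.
  ring_simplify in E. lra.
Qed.

Definition aV (w : Form) (u : nat) : R :=
  match u with 0%nat => w 5%nat | 1%nat => w 6%nat | 3%nat => - w 12%nat | 4%nat => - w 20%nat | _ => 0 end.
Definition bV (w : Form) (u : nat) : R :=
  match u with 0%nat => w 33%nat | 1%nat => w 34%nat | 3%nat => w 40%nat | 4%nat => w 48%nat | _ => 0 end.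
Definition eta (w : Form) : Form := fun S =>
  if Nat.eqb S 3 then aV w 0 * bV w 1 - aV w 1 * bV w 0
  else if Nat.eqb S 9 then aV w 0 * bV w 3 - aV w 3 * bV w 0
  else if Nat.eqb S 17 then aV w 0 * bV w 4 - aV w 4 * bV w 0
  else if Nat.eqb S 10 then aV w 1 * bV w 3 - aV w 3 * bV w 1
  else if Nat.eqb S 18 then aV w 1 * bV w 4 - aV w 4 * bV w 1
  else if Nat.eqb S 24 then aV w 3 * bV w 4 - aV w 4 * bV w 3 else 0.
Definition cw (w : Form) : Form := fun S =>
  if andb (Nat.eqb (popcount S) 2) (negb (Nat.eqb S 36)) then w S else 0.
Definition Av (w : Form) (v : Vec) : R := aV w 0 * v 0%nat + aV w 1 * v 1%nat + aV w 3 * v 3%nat + aV w 4 * v 4%nat.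
Definition Bv (w : Form) (v : Vec) : R := bV w 0 * v 0%nat + bV w 1 * v 1%nat + bV w 3 * v 3%nat + bV w 4 * v 4%nat.

Lemma cw_eq w : isForm 2 w -> w 36%nat = 0 -> forall S, (S < 64)%nat -> w S = cw w S.
Proof.
  intros H H36 S HS. unfold cw. destruct (Nat.eqb (popcount S) 2) eqn:E; simpl.
  - destruct (Nat.eqb S 36) eqn:E2; simpl; [|reflexivity]. apply Nat.eqb_eq in E2; subst; auto.
  - apply H; auto. apply Nat.eqb_neq; auto.
Qed.

Ltac rcomp := cbv -[Rplus Rmult Ropp Rinv IZR Rminus Rdiv]; ring.

Lemma I_cube w : cube (cw w) 63%nat = -6 * wedge (cw w) (eta w) 27%nat.
Proof. rcomp. Qed.

Lemma I_eval w k v u : eval2 (fadd (cw w) (fscale k (eta w))) v u = eval2 (cw w) v u + k * (Av w v * Bv w u - Bv w v * Av w u).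
Proof. rcomp. Qed.

Lemma I_e2 w v : eval2 (cw w) v (ebasis 2) = Av w v.
Proof. rcomp. Qed.

Lemma I_e5 w v : eval2 (cw w) v (ebasis 5) = Bv w v.
Proof. rcomp. Qed.

Lemma I_cube_t w k : cube (fadd (cw w) (fscale k (eta w))) 63%nat = cube (cw w) 63%nat.
Proof. rcomp. Qed.

Lemma I_sq w k : forall S, (S < 64)%nat ->
  wedge (fadd (cw w) (fscale k (eta w))) (fadd (cw w) (fscale k (eta w))) S =
  wedge (cw w) (cw w) S + (if Nat.eqb S 27 then 2 * k * wedge (cw w) (eta w) 27%nat else 0).
Proof. apply all64; rcomp. Qed.

Definition inU3 (S : nat) : bool := (Nat.eqb S 11 || Nat.eqb S 19 || Nat.eqb S 25 || Nat.eqb S 26)%bool.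
Definition inE25 (S : nat) : bool := (Nat.eqb S 37 || Nat.eqb S 38 || Nat.eqb S 44 || Nat.eqb S 52)%bool.
Definition inU2 (S : nat) : bool :=
  (Nat.eqb S 3 || Nat.eqb S 9 || Nat.eqb S 17 || Nat.eqb S 10 || Nat.eqb S 18 || Nat.eqb S 24)%bool.

Ltac orb_false H :=
  repeat match type of H with
  | (_ || _)%bool = false => apply Bool.orb_false_elim in H; destruct H as [H ?]
  end.

Lemma dF_singleF a T S0 (p : nat -> bool) : (T < 64)%nat -> (S0 < 64)%nat ->
  (forall S, (S < 64)%nat -> p S = true -> a S = 0) ->
  forallb (fun S => if Nat.eqb S S0 then true else if p S then true else Z.eqb (dmonoF (bits S) T) 0) masks = true ->
  dF a T = a S0 * IZR (dmonoF (bits S0) T).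
Proof.
  intros HT HS0 Hp Hc. rewrite dF_F by auto. apply (sumL_single (fun S => a S * IZR (dmonoF (bits S) T))); auto.
  intros x Hx Hne. pose proof (forallb_seq _ _ Hc x Hx) as H. cbv beta in H.
  apply Nat.eqb_neq in Hne. rewrite Hne in H. destruct (p x) eqn:E.
  - rewrite Hp; auto. ring.
  - apply Z.eqb_eq in H. rewrite H. ring.
Qed.

Definition p3 (S : nat) : bool := negb (Nat.eqb (popcount S) 3).

Lemma p3_zero a : isForm 3 a -> forall S, (S < 64)%nat -> p3 S = true -> a S = 0.
Proof.
  intros H S HS Hp. apply H; auto. unfold p3 in Hp. apply Bool.negb_true_iff, Nat.eqb_neq in Hp. auto.
Qed.

Lemma rho_E25 rho0 : isForm 3 rho0 -> feq (dF rho0) fzero ->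
  rho0 37%nat = 0 /\ rho0 38%nat = 0 /\ rho0 44%nat = 0 /\ rho0 52%nat = 0.
Proof.
  intros H3 Hd.
  assert (G : forall T S0, (T < 64)%nat -> (S0 < 64)%nat ->
     forallb (fun S => if Nat.eqb S S0 then true else if p3 S then true else Z.eqb (dmonoF (bits S) T) 0) masks = true ->
     rho0 S0 * IZR (dmonoF (bits S0) T) = 0).
  { intros T S0 HT HS0 Hc. rewrite <- (dF_singleF rho0 T S0 p3 HT HS0 (p3_zero rho0 H3) Hc). apply Hd; auto. }
  pose proof (G 29%nat 37%nat ltac:(lia) ltac:(lia) ltac:(vm_compute; reflexivity)) as E1.
  pose proof (G 30%nat 38%nat ltac:(lia) ltac:(lia) ltac:(vm_compute; reflexivity)) as E2.
  pose proof (G 43%nat 44%nat ltac:(lia) ltac:(lia) ltac:(vm_compute; reflexivity)) as E3.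
  pose proof (G 51%nat 52%nat ltac:(lia) ltac:(lia) ltac:(vm_compute; reflexivity)) as E4.
  replace (dmonoF (bits 37) 29) with (-1)%Z in E1 by (vm_compute; reflexivity).
  replace (dmonoF (bits 38) 30) with (-1)%Z in E2 by (vm_compute; reflexivity).
  replace (dmonoF (bits 44) 43) with (-1)%Z in E3 by (vm_compute; reflexivity).
  replace (dmonoF (bits 52) 51) with (-1)%Z in E4 by (vm_compute; reflexivity).
  repeat split; lra.
Qed.

Lemma gamma_supp w0 : isForm 2 w0 -> w0 36%nat = 0 -> forall T, (T < 64)%nat -> inU3 T = false -> dF w0 T = 0.
Proof.
  intros H2 H36. apply (dF_zero_allF w0 (fun S => orb (negb (Nat.eqb (popcount S) 2)) (Nat.eqb S 36)) inU3).
  - intros S HS Hp. destruct (Nat.eqb S 36) eqn:E.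
    + apply Nat.eqb_eq in E; subst; auto.
    + rewrite Bool.orb_false_r in Hp. apply H2; auto. apply Bool.negb_true_iff, Nat.eqb_neq in Hp; auto.
  - vm_compute; reflexivity.
Qed.

Lemma rh_supp rh : isForm 3 rh -> rh 37%nat = 0 -> rh 38%nat = 0 -> rh 44%nat = 0 -> rh 52%nat = 0 ->
  forall T, (T < 64)%nat -> Nat.eqb T 27 = false -> dF rh T = 0.
Proof.
  intros H3 Z1 Z2 Z3 Z4. apply (dF_zero_allF rh (fun S => orb (p3 S) (inE25 S)) (fun T => Nat.eqb T 27)).
  - intros S HS Hp. destruct (p3 S) eqn:E.
    + apply p3_zero; auto.
    + simpl in Hp. unfold inE25 in Hp.
      repeat match type of Hp with (_ || _)%bool = true => apply Bool.orb_true_iff in Hp; destruct Hp as [Hp|Hp] end;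
      apply Nat.eqb_eq in Hp; subst; auto.
  - vm_compute; reflexivity.
Qed.

Lemma dF_U3zero d : (forall S, (S < 64)%nat -> inU3 S = false -> d S = 0) -> forall T, (T < 64)%nat -> dF d T = 0.
Proof.
  intros H T HT. refine (dF_zero_allF d (fun S => negb (inU3 S)) (fun _ => false) _ _ T HT eq_refl).
  - intros S HS Hp. apply H; auto. apply Bool.negb_true_iff in Hp; auto.
  - vm_compute; reflexivity.
Qed.

Lemma eta_zero w S : inU2 S = false -> eta w S = 0.
Proof.
  intros H. unfold inU2 in H. orb_false H. unfold eta.
  repeat match goal with H : Nat.eqb _ _ = false |- _ => rewrite H; clear H end. reflexivity.
Qed.

Lemma dF_eta w T : (T < 64)%nat -> dF (eta w) T = 0.
Proof.
  intros HT. refine (dF_zero_allF (eta w) (fun S => negb (inU2 S)) (fun _ => false) _ _ T HT eq_refl).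
  - intros S HS Hp. apply eta_zero. apply Bool.negb_true_iff in Hp; auto.
  - vm_compute; reflexivity.
Qed.

Lemma eta_form w : isForm 2 (eta w).
Proof.
  assert (H : forallb (fun S => if inU2 S then Nat.eqb (popcount S) 2 else true) (seq 0 64) = true) by (vm_compute; reflexivity).
  intros S HS Hp. destruct (inU2 S) eqn:E.
  - pose proof (forallb_seq _ _ H S HS) as G. cbv beta in G. rewrite E in G. apply Nat.eqb_eq in G. contradiction.
  - apply eta_zero; auto.
Qed.

Lemma sumL_exchange (f : nat -> nat -> R) l1 l2 :
  sumL (fun i => sumL (fun B => f i B) l2) l1 = sumL (fun B => sumL (fun i => f i B) l1) l2.
Proof.
  induction l1 as [|a l1 IH]; simpl.
  - symmetry. apply sumL_zero. intros; reflexivity.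
  - rewrite IH. rewrite <- sumL_plus. reflexivity.
Qed.

Lemma sumL_mulr (f : nat -> R) c l : sumL f l * c = sumL (fun x => f x * c) l.
Proof. induction l; simpl; [ring|]. rewrite <- IHl. ring. Qed.

Lemma DK_lin r b : DK r b = sumL (fun B => b B * DK r (eB B)) M3.
Proof.
  transitivity (sumL (fun B => b B * DKl r (eB B)) M3).
  - rewrite DK_DKl. unfold DKl.
    transitivity (/ 6 * sumL (fun i => sumL (fun j => sumL (fun B => b B *
        (Kl r (eB B) i j * Kp r j i + Kp r i j * Kl r (eB B) j i)) M3) idx) idx).
    + f_equal. apply sumL_ext; intros i _. apply sumL_ext; intros j _.
      rewrite (Kl_lin r b i j), (Kl_lin r b j i). rewrite sumL_mulr. rewrite (Rmult_comm (Kp r i j) (sumL _ _)), sumL_mulr, <- sumL_plus.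
      apply sumL_ext; intros B _. ring.
    + transitivity (/ 6 * sumL (fun B => sumL (fun i => sumL (fun j => b B *
        (Kl r (eB B) i j * Kp r j i + Kp r i j * Kl r (eB B) j i)) idx) idx) M3).
      * f_equal. etransitivity.
        { apply sumL_ext; intros i _. exact (sumL_exchange (fun j B => b B * (Kl r (eB B) i j * Kp r j i + Kp r i j * Kl r (eB B) j i)) idx M3). }
        exact (sumL_exchange (fun i B => sumL (fun j => b B * (Kl r (eB B) i j * Kp r j i + Kp r i j * Kl r (eB B) j i)) idx) idx M3).
      * rewrite <- sumL_scal. apply sumL_ext; intros B _.
        rewrite (sumL_ext (fun i => sumL (fun j => b B * _) idx) (fun i => b B * sumL (fun j => Kl r (eB B) i j * Kp r j i + Kp r i j * Kl r (eB B) j i) idx)) by (intros; apply sumL_scal).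
        rewrite sumL_scal. ring.
  - apply sumL_ext. intros B _. rewrite DK_DKl. reflexivity.
Qed.

Definition rhT (C : R) (r : Form) : Form := fun S =>
  if Nat.eqb (popcount S) 3 then sig S * C * DK r (eB (63 - S)) else 0.

Lemma rhT_form C r : isForm 3 (rhT C r).
Proof. intros S HS Hp. unfold rhT. apply Nat.eqb_neq in Hp. rewrite Hp. reflexivity. Qed.

Lemma rhT_wedge C r b : wedge (rhT C r) b 63%nat = C * DK r b.
Proof.
  rewrite DK_lin. unfold wedge, rhT, sig.
  cbv -[Rplus Rmult Ropp Rinv IZR Rminus Rdiv DK eB]. ring.
Qed.

Definition W1 : list nat := [7; 13; 14; 21; 22; 28; 35; 41; 42; 49; 50; 56]%nat.
Definition U3l : list nat := [11; 19; 25; 26]%nat.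

Lemma DK_shift_all r g t B : In B W1 -> DK (fadd (cr r) (fscale t (cg g))) (eB B) = DK (cr r) (eB B).
Proof.
  simpl. intros HB.
  destruct HB as [<-|HB]; [apply DK_shift_7|]. destruct HB as [<-|HB]; [apply DK_shift_13|].
  destruct HB as [<-|HB]; [apply DK_shift_14|]. destruct HB as [<-|HB]; [apply DK_shift_21|].
  destruct HB as [<-|HB]; [apply DK_shift_22|]. destruct HB as [<-|HB]; [apply DK_shift_28|].
  destruct HB as [<-|HB]; [apply DK_shift_35|]. destruct HB as [<-|HB]; [apply DK_shift_41|].
  destruct HB as [<-|HB]; [apply DK_shift_42|]. destruct HB as [<-|HB]; [apply DK_shift_49|].
  destruct HB as [<-|HB]; [apply DK_shift_50|]. destruct HB as [<-|HB]; [apply DK_shift_56|].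
  contradiction.
Qed.

Lemma DK_U3_all r B : In B U3l -> DK (cr r) (eB B) = 0.
Proof.
  simpl. intros HB.
  destruct HB as [<-|HB]; [apply DK_U3_11|]. destruct HB as [<-|HB]; [apply DK_U3_19|].
  destruct HB as [<-|HB]; [apply DK_U3_25|]. destruct HB as [<-|HB]; [apply DK_U3_26|].
  contradiction.
Qed.

Lemma enum_check : forall S, (S < 64)%nat -> popcount S = 3%nat -> inU3 S = false ->
  In (63 - S)%nat U3l \/ In (63 - S)%nat W1.
Proof.
  assert (H : forallb (fun S => if Nat.eqb (popcount S) 3 then (if inU3 S then true else
     orb (existsb (Nat.eqb (63 - S)) U3l) (existsb (Nat.eqb (63 - S)) W1)) else true) (seq 0 64) = true)
    by (vm_compute; reflexivity).
  intros S HS Hp Hu. pose proof (forallb_seq _ _ H S HS) as G. cbv beta in G.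
  rewrite Hp, Hu in G. change (Nat.eqb 3 3) with true in G. cbv iota beta in G. apply Bool.orb_true_iff in G. destruct G as [G|G];
  apply existsb_exists in G; destruct G as [x [Hx Ex]]; apply Nat.eqb_eq in Ex; rewrite Ex; auto.
Qed.

Lemma pop_comp : forall S, (S < 64)%nat -> popcount S = 3%nat -> popcount (63 - S) = 3%nat.
Proof.
  assert (H : forallb (fun S => if Nat.eqb (popcount S) 3 then Nat.eqb (popcount (63 - S)) 3 else true) (seq 0 64) = true)
    by (vm_compute; reflexivity).
  intros S HS Hp. pose proof (forallb_seq _ _ H S HS) as G. cbv beta in G.
  rewrite Hp in G. change (Nat.eqb 3 3) with true in G. cbv iota beta in G. apply Nat.eqb_eq; auto.
Qed.

Lemma inU3_pop : forall S, (S < 64)%nat -> inU3 S = true -> popcount S = 3%nat.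
Proof.
  assert (H : forallb (fun S => if inU3 S then Nat.eqb (popcount S) 3 else true) (seq 0 64) = true)
    by (vm_compute; reflexivity).
  intros S HS Hp. pose proof (forallb_seq _ _ H S HS) as G. cbv beta in G.
  rewrite Hp in G. apply Nat.eqb_eq; auto.
Qed.

Lemma cr_eq r : r 37%nat = 0 -> r 38%nat = 0 -> r 44%nat = 0 -> r 52%nat = 0 ->
  forall S, (S < 64)%nat -> r S = cr r S.
Proof.
  intros Z1 Z2 Z3 Z4 S HS. unfold cr. destruct (_ || _)%bool eqn:E; [|reflexivity].
  repeat match type of E with (_ || _)%bool = true => apply Bool.orb_true_iff in E; destruct E as [E|E] end;
  apply Nat.eqb_eq in E; subst; auto.
Qed.

Lemma cg_eq g : (forall T, (T < 64)%nat -> inU3 T = false -> g T = 0) -> forall S, (S < 64)%nat -> g S = cg g S.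
Proof.
  intros Hg S HS. unfold cg. fold (inU3 S). destruct (inU3 S) eqn:E; [reflexivity|]. apply Hg; auto.
Qed.

Lemma rhT_E25 C r : r 37%nat = 0 -> r 38%nat = 0 -> r 44%nat = 0 -> r 52%nat = 0 ->
  rhT C r 37%nat = 0 /\ rhT C r 38%nat = 0 /\ rhT C r 44%nat = 0 /\ rhT C r 52%nat = 0.
Proof.
  intros Z1 Z2 Z3 Z4. assert (Hc := cr_eq r Z1 Z2 Z3 Z4). unfold rhT.
  change (Nat.eqb (popcount 37) 3) with true; change (Nat.eqb (popcount 38) 3) with true;
  change (Nat.eqb (popcount 44) 3) with true; change (Nat.eqb (popcount 52) 3) with true; cbv iota beta.
  replace (63 - 37)%nat with 26%nat by reflexivity; replace (63 - 38)%nat with 25%nat by reflexivity;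
  replace (63 - 44)%nat with 19%nat by reflexivity; replace (63 - 52)%nat with 11%nat by reflexivity.
  rewrite !(DK_ext r (cr r)) by auto.
  rewrite DK_U3_26, DK_U3_25, DK_U3_19, DK_U3_11. repeat split; ring.
Qed.

Lemma dlin1 a b t : derivable_pt_lim (fun s => a + s * b) t b.
Proof.
  assert (H := derivable_pt_lim_plus _ _ _ _ _ (derivable_pt_lim_const a t)
     (derivable_pt_lim_mult _ _ _ _ _ (derivable_pt_lim_id t) (derivable_pt_lim_const b t))).
  assert (E : 0 + (1 * fct_cte b t + id t * 0) = b) by (unfold fct_cte, id; ring).
  rewrite E in H. exact H.
Qed.

Theorem proposition4p12 (w0 rho0 rh0 : Form) :
  HStructure w0 rho0 ->
  HalfFlat w0 rho0 ->
  (forall z1 z2 : Vec, inCentre z1 -> inCentre z2 -> eval2 w0 z1 z2 = 0) ->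
  IsHat w0 rho0 rh0 ->
  exists (w rho : R -> Form),
    feq (w 0) w0 /\ feq (rho 0) rho0 /\
    forall t : R,
      isForm 2 (w t) /\ isForm 3 (rho t) /\
      nondeg (w t) /\ stable (rho t) /\
      (* affine linear form of the solution *)
      feq (sigma4 (w t)) (fadd (sigma4 w0) (fscale t (dF rh0))) /\
      feq (rho t) (fadd rho0 (fscale t (dF w0))) /\
      (* evolution equations  rho' = d omega,  sigma' = d rhohat *)
      (forall S, (S < 64)%nat ->
         derivable_pt_lim (fun s => rho s S) t (dF (w t) S)) /\
      (exists rh, IsHat (w t) (rho t) rh /\
         forall S, (S < 64)%nat ->
           derivable_pt_lim (fun s => sigma4 (w s) S) t (dF rh S)).
Proof.
  intros [Hw2 [Hr3 [Hnd [Hst [Hwr [rh' [Hh' Hnorm]]]]]]] [Hdr Hdw] Hc Hh.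
  assert (H36 := w36 w0 Hc).
  destruct (rho_E25 rho0 Hr3 Hdr) as [R37 [R38 [R44 R52]]].
  set (g := dF w0).
  assert (Hg : forall T, (T < 64)%nat -> inU3 T = false -> g T = 0) by (apply gamma_supp; auto).
  assert (Hg3 : isForm 3 g).
  { intros S HS Hp. apply Hg; auto. destruct (inU3 S) eqn:E; auto. exfalso. apply Hp, inU3_pop; auto. }
  assert (Hl : LK rho0 <> 0) by (rewrite <- lam_LK; auto).
  set (C0 := Cf w0 rho0).
  assert (Hhat : forall rh, IsHat w0 rho0 rh -> forall b, isForm 3 b -> wedge rh b 63%nat = C0 * DK rho0 b).
  { intros rh Hrh b Hb. destruct Hrh as [_ Hd].
    eapply uniqueness_limite; [apply Hd, Hb | apply Dphi; auto]. }
  (* normalisation gives cube w0 <> 0 *)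
  assert (Hsq : 0 < sqrt (Rabs (LK rho0))) by (apply sqrt_lt_R0, Rabs_pos_lt; auto).
  assert (Hcube : cube w0 63%nat <> 0).
  { intros Hz. pose proof (Hnorm 63%nat ltac:(lia)) as E. unfold fscale in E.
    rewrite (Hhat rh' Hh' rho0 Hr3), DK_euler, Hz in E.
    assert (E2 : orient w0 * sgn (LK rho0) * (4 * LK rho0) = (C0 * (4 * LK rho0)) * (2 * sqrt (Rabs (LK rho0)))).
    { unfold C0, Cf. field. lra. }
    rewrite E in E2. unfold orient, sgn in E2.
    destruct (Rlt_dec 0 (cube w0 63%nat)); destruct (Rlt_dec 0 (LK rho0)); lra. }
  assert (HcwE : forall S, (S < 64)%nat -> w0 S = cw w0 S) by (apply cw_eq; auto).
  set (m := wedge (cw w0) (eta w0) 27%nat).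
  assert (Hm : m <> 0).
  { intros Hm0. apply Hcube. rewrite (cube_ext w0 (cw w0)) by auto. rewrite I_cube. fold m. rewrite Hm0. ring. }
  assert (Hrh0 : forall S, (S < 64)%nat -> rh0 S = rhT C0 rho0 S).
  { intros S HS. unfold rhT. destruct (Nat.eqb (popcount S) 3) eqn:Ep.
    - apply Nat.eqb_eq in Ep.
      assert (Hb : isForm 3 (eB (63 - S))) by (apply isForm3_eB, pop_comp; auto).
      pose proof (Hhat rh0 Hh (eB (63 - S)) Hb) as E. rewrite wedge_eB in E by lia.
      replace (63 - (63 - S))%nat with S in E by lia.
      rewrite Rmult_assoc, <- E, <- Rmult_assoc, sig_sq. ring.
    - destruct Hh as [Hh3 _]. apply Hh3; auto. apply Nat.eqb_neq; auto. }
  destruct (rhT_E25 C0 rho0 R37 R38 R44 R52) as [Q37 [Q38 [Q44 Q52]]].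
  assert (Hrh3 : isForm 3 rh0) by (destruct Hh; auto).
  assert (Hdrh : forall T, (T < 64)%nat -> Nat.eqb T 27 = false -> dF rh0 T = 0).
  { apply rh_supp; auto; rewrite Hrh0 by lia; auto. }
  set (k := dF rh0 27%nat). set (c := k / m).
  set (eta0 := eta w0).
  exists (fun t => fadd w0 (fscale (t * c) eta0)), (fun t => fadd rho0 (fscale t g)).
  split; [intros S HS; unfold fadd, fscale; ring|].
  split; [intros S HS; unfold fadd, fscale; ring|].
  intros t.
  set (wt := fadd w0 (fscale (t * c) eta0)).
  set (rt := fadd rho0 (fscale t g)).
  assert (Hwt : forall S, (S < 64)%nat -> wt S = fadd (cw w0) (fscale (t * c) eta0) S).
  { intros S HS. unfold wt, fadd. rewrite HcwE; auto. }
  assert (Hrt : forall S, (S < 64)%nat -> rt S = fadd (cr rho0) (fscale t (cg g)) S).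
  { apply fadd_ext. apply cr_eq; auto. intros S HS. unfold fscale. rewrite (cg_eq g Hg); auto. }
  assert (Hrt3 : isForm 3 rt) by (apply isForm3_add; auto).
  assert (HLt : LK rt = LK rho0).
  { rewrite (LK_ext rt _ Hrt), LK_shift. symmetry. apply LK_ext. apply cr_eq; auto. }
  assert (Hor : orient wt = orient w0).
  { unfold orient. rewrite (cube_ext wt _ Hwt). unfold eta0. rewrite I_cube_t.
    rewrite <- (cube_ext w0 (cw w0)) by auto. reflexivity. }
  assert (HCf : Cf wt rt = C0) by (unfold C0, Cf; rewrite Hor, HLt; reflexivity).
  assert (HdF : forall S, (S < 64)%nat -> dF (rhT C0 rt) S = dF rh0 S).
  { intros S HS. rewrite (dF_ext rh0 (rhT C0 rho0)) by auto.
    assert (Hd : dF (fadd (rhT C0 rt) (fscale (-1) (rhT C0 rho0))) S = 0).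
    { apply dF_U3zero; auto. intros S' HS' Hu. unfold fadd, fscale, rhT.
      destruct (Nat.eqb (popcount S') 3) eqn:Ep; [|ring].
      apply Nat.eqb_eq in Ep.
      destruct (enum_check S' HS' Ep Hu) as [HB|HB].
      - rewrite (DK_ext rt (cr rt)).
        + rewrite (DK_ext rho0 (cr rho0)) by (apply cr_eq; auto).
          rewrite !DK_U3_all by auto. ring.
        + apply cr_eq; unfold rt, fadd, fscale; [rewrite R37, (Hg 37%nat) | rewrite R38, (Hg 38%nat)
            | rewrite R44, (Hg 44%nat) | rewrite R52, (Hg 52%nat)]; try lia; try reflexivity; ring.
      - rewrite (DK_ext rt _ _ Hrt), DK_shift_all by auto.
        rewrite <- (DK_ext rho0 (cr rho0)) by (apply cr_eq; auto). ring. }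
    rewrite dF_add, dF_scal in Hd. lra. }
  assert (Hsig : forall s S, (S < 64)%nat -> sigma4 (fadd w0 (fscale (s * c) eta0)) S = sigma4 w0 S + s * dF rh0 S).
  { intros s S HS. assert (Es : forall x S0, sigma4 x S0 = 1/2 * wedge x x S0) by reflexivity. rewrite !Es.
    assert (Hws : forall S, (S < 64)%nat -> fadd w0 (fscale (s * c) eta0) S = fadd (cw w0) (fscale (s * c) eta0) S).
    { intros S0 HS0. unfold fadd. rewrite HcwE; auto. }
    rewrite (wedge_ext _ (fadd (cw w0) (fscale (s * c) eta0)) _ (fadd (cw w0) (fscale (s * c) eta0))) by auto.
    rewrite (wedge_ext w0 (cw w0) w0 (cw w0)) by auto.
    unfold eta0. rewrite I_sq by auto.
    destruct (Nat.eqb S 27) eqn:E.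
    - apply Nat.eqb_eq in E. subst S. fold m. unfold c, k. field. auto.
    - rewrite Hdrh by auto. ring. }
  repeat split.
  -
    intros S HS Hp. unfold wt, fadd, fscale. rewrite Hw2, (eta_form w0) by auto. ring.
  - exact Hrt3.
  -
    intros v Hv. apply Hnd. intros u.
    assert (Ht : forall u, eval2 wt v u = eval2 (cw w0) v u + (t * c) * (Av w0 v * Bv w0 u - Bv w0 v * Av w0 u)).
    { intros u0. rewrite (eval2_ext wt _ v u0 Hwt). apply I_eval. }
    assert (A2 : Av w0 (ebasis 2) = 0) by (unfold Av, ebasis; simpl; ring).
    assert (B2 : Bv w0 (ebasis 2) = 0) by (unfold Bv, ebasis; simpl; ring).
    assert (A5 : Av w0 (ebasis 5) = 0) by (unfold Av, ebasis; simpl; ring).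
    assert (B5 : Bv w0 (ebasis 5) = 0) by (unfold Bv, ebasis; simpl; ring).
    assert (HA : Av w0 v = 0).
    { pose proof (Hv (ebasis 2)) as E. rewrite Ht, I_e2, A2, B2 in E. lra. }
    assert (HB : Bv w0 v = 0).
    { pose proof (Hv (ebasis 5)) as E. rewrite Ht, I_e5, A5, B5 in E. lra. }
    pose proof (Hv u) as E. rewrite Ht, HA, HB in E.
    rewrite (eval2_ext w0 (cw w0)) by auto. lra.
  -
    unfold stable. rewrite lam_LK by auto. rewrite HLt. auto.
  -
    intros S HS. unfold wt. rewrite Hsig by auto. reflexivity.
  -
    intros S HS. change (fun s => fadd rho0 (fscale s g) S) with (fun s => rho0 S + s * g S).
    replace (dF wt S) with (g S).
    + apply dlin1.
    + unfold wt, eta0. rewrite dF_add, dF_scal, dF_eta by auto. unfold g. ring.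
  -
    exists (rhT C0 rt). split.
    + split; [apply rhT_form|]. intros b Hb.
      rewrite rhT_wedge, <- HCf. apply Dphi; auto. rewrite HLt; auto.
    + intros S HS.
      assert (E : (fun s => sigma4 (fadd w0 (fscale (s * c) eta0)) S) = (fun s => sigma4 w0 S + s * dF rh0 S)).
      { apply functional_extensionality. intros s. apply Hsig; auto. }
      rewrite E, HdF by auto. apply dlin1.
Qed.
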